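(* Let $H$ be a complex infinite-dimensional separable Hilbert space and let $(f_n)_{n=1}^\infty$ be a frame for $H$ with optimal upper frame bound $B$ and analysis operator $U$, such that its excess $e((f_n)_{n=1}^\infty)$ is finite and $\dim\operatorname{Im}(B\cdot I-U^*U)<\infty$. Then $\sum_{n=1}^\infty(B-\|f_n\|^2)<\infty$.
   Context: The analysis operator is $U:H\to\ell^2$, $Ux=(\langle x,f_n\rangle)_n$. The optimal upper frame bound is the infimum of all $B$ with $\sum_n|\langle x,f_n\rangle|^2\le B\|x\|^2$ for all $x$. The excess of a frame is the maximal number of elements that can be deleted so that the remaining sequence is still a frame for $H$. *)

(* Defs.v *)
From Stdlib Require Import Reals List.
Open Scope R_scope.

Record C := mkC { Cre : R ; Cim : R }.
Definition C0 : C := mkC 0 0.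
Definition C1 : C := mkC 1 0.
Definition Cadd (a b : C) : C := mkC (Cre a + Cre b) (Cim a + Cim b).
Definition Cmul (a b : C) : C :=
  mkC (Cre a * Cre b - Cim a * Cim b) (Cre a * Cim b + Cim a * Cre b).
Definition Cconj (a : C) : C := mkC (Cre a) (- Cim a).
Definition RtoC (r : R) : C := mkC r 0.
Definition Cmod2 (a : C) : R := Cre a * Cre a + Cim a * Cim a.

Record CHilbert := {
  vec :> Type;
  vzero : vec;
  vadd : vec -> vec -> vec;
  vopp : vec -> vec;
  vscal : C -> vec -> vec;
  inner : vec -> vec -> C;   (* linear in the first argument *)
  vadd_assoc : forall x y z, vadd x (vadd y z) = vadd (vadd x y) z;
  vadd_comm : forall x y, vadd x y = vadd y x;
  vadd_zero : forall x, vadd vzero x = x;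
  vadd_opp : forall x, vadd x (vopp x) = vzero;
  vscal_assoc : forall a b x, vscal a (vscal b x) = vscal (Cmul a b) x;
  vscal_one : forall x, vscal C1 x = x;
  vscal_distr_v : forall a x y, vscal a (vadd x y) = vadd (vscal a x) (vscal a y);
  vscal_distr_c : forall a b x, vscal (Cadd a b) x = vadd (vscal a x) (vscal b x);
  inner_add_l : forall x y z, inner (vadd x y) z = Cadd (inner x z) (inner y z);
  inner_scal_l : forall a x z, inner (vscal a x) z = Cmul a (inner x z);
  inner_conj_sym : forall x y, inner y x = Cconj (inner x y);
  inner_pos : forall x, 0 <= Cre (inner x x);
  inner_def : forall x, inner x x = C0 -> x = vzero;
  complete : forall u : nat -> vec,
    (forall eps, eps > 0 -> exists N, forall m n, (m >= N)%nat -> (n >= N)%nat ->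
        sqrt (Cre (inner (vadd (u m) (vopp (u n))) (vadd (u m) (vopp (u n))))) < eps) ->
    exists l, forall eps, eps > 0 -> exists N, forall n, (n >= N)%nat ->
        sqrt (Cre (inner (vadd (u n) (vopp l)) (vadd (u n) (vopp l)))) < eps
}.

Arguments vzero {_}. Arguments vadd {_}. Arguments vopp {_}.
Arguments vscal {_}. Arguments inner {_}.

Section H.
Variable H : CHilbert.

Definition vsub (x y : H) : H := vadd x (vopp y).
Definition vnorm (x : H) : R := sqrt (Cre (inner x x)).

Fixpoint in_span (l : list H) (x : H) : Prop :=
  match l with
  | nil => x = vzero
  | v :: l' => exists (c : C) (y : H), in_span l' y /\ x = vadd (vscal c v) y
  end.

Definition separable : Prop :=
  exists d : nat -> H, forall x eps, eps > 0 -> exists n, vnorm (vsub x (d n)) < eps.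

Definition infinite_dimensional : Prop :=
  ~ exists l : list H, forall x, in_span l x.

(* Subfamilies (f_n)_{n in P} are described by a boolean predicate P on
   the index set. The Bessel-type sum sum_{n in P} |<x,f_n>|^2. *)
Definition frame_terms (P : nat -> bool) (f : nat -> H) (x : H) (n : nat) : R :=
  if P n then Cmod2 (inner x (f n)) else 0.

Definition is_frame_on (P : nat -> bool) (f : nat -> H) : Prop :=
  exists A B, 0 < A /\ 0 < B /\
    forall x, exists s, infinite_sum (frame_terms P f x) s /\
       A * vnorm x ^ 2 <= s /\ s <= B * vnorm x ^ 2.

Definition is_frame (f : nat -> H) : Prop := is_frame_on (fun _ => true) f.

Definition upper_frame_bound (f : nat -> H) (B : R) : Prop :=
  forall x, exists s, infinite_sum (frame_terms (fun _ => true) f x) s /\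
     s <= B * vnorm x ^ 2.

Definition optimal_upper_frame_bound (f : nat -> H) (B : R) : Prop :=
  (forall B', upper_frame_bound f B' -> B <= B') /\
  (forall m, (forall B', upper_frame_bound f B' -> m <= B') -> m <= B).

Fixpoint frame_psum (f : nat -> H) (x : H) (N : nat) : H :=
  match N with
  | O => vscal (inner x (f O)) (f O)
  | S N' => vadd (frame_psum f x N') (vscal (inner x (f N)) (f N))
  end.

(* U^*U x = y, where U x = (<x,f_n>)_n is the analysis operator:
   U^*U x = sum_n <x,f_n> f_n (norm-convergent series) *)
Definition frame_op_at (f : nat -> H) (x y : H) : Prop :=
  forall eps, eps > 0 -> exists N, forall n, (n >= N)%nat ->
     vnorm (vsub (frame_psum f x n) y) < eps.

Definition finite_dim_range_BI_minus_frame_op (f : nat -> H) (B : R) : Prop :=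
  exists l : list H, forall x y, frame_op_at f x y ->
     in_span l (vsub (vscal (RtoC B) x) y).

Definition card_le (S : nat -> bool) (N : nat) : Prop :=
  forall l : list nat, NoDup l -> (forall n, In n l -> S n = true) ->
    (length l <= N)%nat.

Definition deletable (f : nat -> H) (S : nat -> bool) : Prop :=
  is_frame_on (fun n => negb (S n)) f.

(* the excess e(f) = sup { |S| : S deletable } is finite *)
Definition finite_excess (f : nat -> H) : Prop :=
  exists N : nat, forall S, deletable f S -> card_le S N.

End H.

(* Main.v *)
From Pilot Require Import Defs.
From Stdlib Require Import Reals List Lra Lia Psatz Classical ClassicalEpsilon FunctionalExtensionality.
Import Pilot.Defs.
Open Scope R_scope.

Lemma Cext (a b : C) : Cre a = Cre b -> Cim a = Cim b -> a = b.
Proof. destruct a, b; simpl; intros; subst; reflexivity. Qed.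
Ltac Ceq := apply Cext; simpl; ring.

Definition Copp (a : C) := mkC (- Cre a) (- Cim a).
Definition Cm1 : C := mkC (-1) 0.

Lemma Cmod2_ge0 a : 0 <= Cmod2 a.
Proof. unfold Cmod2; nra. Qed.
Lemma Cmod2_conj a : Cmod2 (Cconj a) = Cmod2 a.
Proof. unfold Cmod2, Cconj; simpl; ring. Qed.
Lemma Cmod2_mul a b : Cmod2 (Cmul a b) = Cmod2 a * Cmod2 b.
Proof. unfold Cmod2, Cmul; simpl; ring. Qed.
Lemma Cmod2_RtoC r : Cmod2 (RtoC r) = r * r.
Proof. unfold Cmod2, RtoC; simpl; ring. Qed.

Record CVS := {
  cv :> Type;
  cz : cv;
  cad : cv -> cv -> cv;
  csc : C -> cv -> cv;
  cad_assoc : forall x y z, cad x (cad y z) = cad (cad x y) z;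
  cad_comm : forall x y, cad x y = cad y x;
  cad_z : forall x, cad cz x = x;
  csc_assoc : forall a b x, csc a (csc b x) = csc (Cmul a b) x;
  csc_one : forall x, csc C1 x = x;
  csc_dv : forall a x y, csc a (cad x y) = cad (csc a x) (csc a y);
  csc_dc : forall a b x, csc (Cadd a b) x = cad (csc a x) (csc b x);
  csc_zero : forall x, csc C0 x = cz }.

Arguments cz {_}. Arguments cad {_}. Arguments csc {_}.

Record SForm (X : CVS) := {
  hf :> X -> X -> C;
  hf_add : forall x y z, hf (cad x y) z = Cadd (hf x z) (hf y z);
  hf_scal : forall a x z, hf (csc a x) z = Cmul a (hf x z);
  hf_sym : forall x y, hf y x = Cconj (hf x y);
  hf_pos : forall x, 0 <= Cre (hf x x) }.

Section Gen.
Variable X : CVS.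
Variable h : SForm X.

Definition csub (x y : X) : X := cad x (csc Cm1 y).

Lemma csc_z a : csc a (@cz X) = cz.
Proof. rewrite <- (csc_zero X cz), csc_assoc.
  replace (Cmul a C0) with C0 by Ceq. reflexivity. Qed.

Lemma cad_z_r (x : X) : cad x cz = x.
Proof. rewrite cad_comm; apply cad_z. Qed.

Lemma csub_add (x p : X) : cad (csub x p) p = x.
Proof. unfold csub. rewrite <- cad_assoc.
  rewrite <- (csc_one X p) at 2. rewrite <- csc_dc.
  replace (Cadd Cm1 C1) with C0 by Ceq. rewrite csc_zero. apply cad_z_r. Qed.

Lemma csub_eq0 (x p : X) : csub x p = cz -> x = p.
Proof. intro E. rewrite <- (csub_add x p), E. apply cad_z. Qed.

Lemma h_zero_l z : h cz z = C0.
Proof. rewrite <- (csc_zero X cz), hf_scal. Ceq. Qed.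
Lemma h_add_r z x y : h z (cad x y) = Cadd (h z x) (h z y).
Proof. rewrite hf_sym, hf_add, (hf_sym _ h x z), (hf_sym _ h y z).
  apply Cext; simpl; ring. Qed.
Lemma h_scal_r a z x : h z (csc a x) = Cmul (Cconj a) (h z x).
Proof. rewrite hf_sym, hf_scal, (hf_sym _ h x z). apply Cext; simpl; ring. Qed.
Lemma h_zero_r z : h z cz = C0.
Proof. rewrite hf_sym, h_zero_l. Ceq. Qed.
Lemma h_sub_l x y z : h (csub x y) z = Cadd (h x z) (Copp (h y z)).
Proof. unfold csub. rewrite hf_add, hf_scal. Ceq. Qed.
Lemma h_sub_r z x y : h z (csub x y) = Cadd (h z x) (Copp (h z y)).
Proof. unfold csub. rewrite h_add_r, h_scal_r. Ceq. Qed.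
Lemma h_im0 x : Cim (h x x) = 0.
Proof. pose proof (hf_sym _ h x x) as E. apply (f_equal Cim) in E. simpl in E. lra. Qed.
Lemma h_real x : h x x = RtoC (Cre (h x x)).
Proof. apply Cext; simpl; [reflexivity|apply h_im0]. Qed.

Lemma h_expand x y l :
  Cre (h (cad x (csc l y)) (cad x (csc l y))) =
  Cre (h x x) + 2 * (Cre l * Cre (h x y) + Cim l * Cim (h x y)) + Cmod2 l * Cre (h y y).
Proof.
  rewrite hf_add, !h_add_r, !hf_scal, !h_scal_r, (hf_sym _ h x y).
  pose proof (h_im0 y). unfold Cmod2; simpl. rewrite H. ring. Qed.

Lemma CS x y : Cmod2 (h x y) <= Cre (h x x) * Cre (h y y).
Proof.
  set (c := h x y). set (A := Cre (h x x)). set (B0 := Cre (h y y)).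
  assert (HA : 0 <= A) by apply hf_pos. assert (HB : 0 <= B0) by apply hf_pos.
  assert (key : forall t, 0 <= A - 2 * t * Cmod2 c + t * t * Cmod2 c * B0).
  { intro t. pose proof (hf_pos _ h (cad x (csc (mkC (- t * Cre c) (- t * Cim c)) y))) as P.
    rewrite h_expand in P. fold c A B0 in P. unfold Cmod2 in *; simpl in P. nra. }
  pose proof (Cmod2_ge0 c) as Hc.
  destruct (Req_dec B0 0) as [E|E].
  - destruct (Req_dec (Cmod2 c) 0) as [E2|E2]; [rewrite E2; nra|].
    specialize (key ((A + 1) / (2 * Cmod2 c))).
    rewrite E in key. exfalso.
    assert (2 * ((A + 1) / (2 * Cmod2 c)) * Cmod2 c = A + 1) by (field; auto).
    nra.
  - specialize (key (/ B0)).
    assert (0 < B0) by lra.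
    assert (A - 2 * / B0 * Cmod2 c + / B0 * / B0 * Cmod2 c * B0 = A - Cmod2 c / B0) by (field; lra).
    rewrite H0 in key.
    assert (Cmod2 c / B0 <= A) by lra.
    apply (Rmult_le_compat_r B0) in H1; [|lra].
    unfold Rdiv in H1. rewrite Rmult_assoc, Rinv_l in H1 by lra. lra. Qed.

Lemma tri x y : sqrt (Cre (h (cad x y) (cad x y))) <= sqrt (Cre (h x x)) + sqrt (Cre (h y y)).
Proof.
  pose proof (h_expand x y C1) as E. rewrite csc_one in E.
  simpl in E. replace (1 * Cre (h x y) + 0 * Cim (h x y)) with (Cre (h x y)) in E by ring.
  unfold Cmod2 in E; simpl in E.
  pose proof (CS x y) as Hcs. pose proof (hf_pos _ h x). pose proof (hf_pos _ h y).
  set (A := Cre (h x x)) in *. set (B0 := Cre (h y y)) in *.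
  assert (Hr : Cre (h x y) <= sqrt A * sqrt B0).
  { rewrite <- sqrt_mult by lra. apply Rsqr_incr_0_var.
    - rewrite Rsqr_sqrt by nra. unfold Rsqr, Cmod2 in *. nra.
    - apply sqrt_pos. }
  pose proof (sqrt_pos A). pose proof (sqrt_pos B0).
  apply Rsqr_incr_0_var; [|nra]. rewrite Rsqr_sqrt.
  - unfold Rsqr. rewrite E. pose proof (sqrt_sqrt A H). pose proof (sqrt_sqrt B0 H0). nra.
  - apply hf_pos. Qed.

Fixpoint Clsum (g : X -> C) (W : list X) : C :=
  match W with nil => C0 | w :: W' => Cadd (g w) (Clsum g W') end.
Fixpoint Rlsum (g : X -> R) (W : list X) : R :=
  match W with nil => 0 | w :: W' => g w + Rlsum g W' end.
Fixpoint comb (a : X -> C) (W : list X) : X :=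
  match W with nil => cz | w :: W' => cad (csc (a w) w) (comb a W') end.

Lemma h_comb_l a W y : h (comb a W) y = Clsum (fun w => Cmul (a w) (h w y)) W.
Proof. induction W; simpl. apply h_zero_l. rewrite hf_add, hf_scal, IHW. reflexivity. Qed.

Lemma Rlsum_ge0 g W : (forall w, 0 <= g w) -> 0 <= Rlsum g W.
Proof. intro H; induction W; simpl; [lra|]. specialize (H a); lra. Qed.

Fixpoint ON (W : list X) : Prop :=
  match W with nil => True
  | w :: W' => h w w = C1 /\ (forall t, In t W' -> h w t = C0) /\ ON W' end.

Lemma Clsum_zero g W : (forall w, In w W -> g w = C0) -> Clsum g W = C0.
Proof. induction W; simpl; intros; auto. rewrite H, IHW by auto. Ceq. Qed.

Lemma Clsum_ext g1 g2 W : (forall w, In w W -> g1 w = g2 w) -> Clsum g1 W = Clsum g2 W.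
Proof. induction W; simpl; intros; auto. rewrite H, IHW by auto. auto. Qed.
Lemma comb_ext g1 g2 W : (forall w, In w W -> g1 w = g2 w) -> comb g1 W = comb g2 W.
Proof. induction W; simpl; intros; auto. rewrite H, IHW by auto. auto. Qed.

Lemma h_comb_in a W w : ON W -> In w W -> h (comb a W) w = a w.
Proof.
  induction W as [|t W' IH]; simpl; [tauto|]. intros [H1 [H2 H3]] Hin.
  rewrite hf_add, hf_scal.
  destruct Hin as [->|Hin].
  - rewrite h_comb_l, Clsum_zero, H1. Ceq.
    intros s Hs. rewrite (hf_sym _ h w s), H2 by auto. Ceq.
  - rewrite IH by auto. rewrite H2 by auto. Ceq. Qed.

Lemma h_comb_orth a W t : (forall w, In w W -> h w t = C0) -> h (comb a W) t = C0.
Proof. intros. rewrite h_comb_l. apply Clsum_zero. intros w Hw. rewrite H by auto. Ceq. Qed.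

Lemma h_comb_self a W : ON W ->
  h (comb a W) (comb a W) = RtoC (Rlsum (fun w => Cmod2 (a w)) W).
Proof.
  induction W as [|t W' IH]; simpl; intros.
  - rewrite h_zero_l. Ceq.
  - destruct H as [H1 [H2 H3]].
    rewrite hf_add, !h_add_r, !hf_scal, !h_scal_r, H1, IH by auto.
    assert (E : h (comb a W') t = C0).
    { apply h_comb_orth. intros w Hw. rewrite hf_sym, H2 by auto. Ceq. }
    rewrite E, (hf_sym _ h (comb a W') t), E. unfold Cmod2; apply Cext; simpl; ring. Qed.

Definition proj W x := comb (fun w => h x w) W.
Definition res W x := csub x (proj W x).

Lemma h_res_in W x w : ON W -> In w W -> h (res W x) w = C0.
Proof. intros. unfold res. rewrite h_sub_l. unfold proj. rewrite h_comb_in by auto. Ceq. Qed.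

Lemma pyth W x : ON W ->
  Cre (h (res W x) (res W x)) = Cre (h x x) - Rlsum (fun w => Cmod2 (h x w)) W.
Proof.
  intro HO. unfold res at 1. rewrite h_sub_l.
  assert (E : h (proj W x) (res W x) = C0).
  { unfold proj. apply h_comb_orth. intros w Hw. rewrite hf_sym, h_res_in by auto. Ceq. }
  rewrite E. unfold res. rewrite h_sub_r. rewrite (hf_sym _ h (proj W x) x).
  assert (E2 : h (proj W x) x = RtoC (Rlsum (fun w => Cmod2 (h x w)) W)).
  { unfold proj. rewrite h_comb_l. clear E. induction W; simpl. Ceq.
    rewrite IHW by (destruct HO as [_ [_ ?]]; auto).
    rewrite (hf_sym _ h a x). unfold Cmod2. Ceq. }
  rewrite E2. simpl. ring. Qed.

Lemma res_nonneg W x : 0 <= Cre (h (res W x) (res W x)).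
Proof. apply hf_pos. Qed.

Fixpoint gspan (L : list X) (x : X) : Prop :=
  match L with nil => x = cz
  | v :: L' => exists c y, gspan L' y /\ x = cad (csc c v) y end.

Lemma gspan_z L : gspan L cz.
Proof. induction L; simpl; auto. exists C0, cz. split; auto. rewrite csc_zero, cad_z. auto. Qed.

Lemma gspan_add L x y : gspan L x -> gspan L y -> gspan L (cad x y).
Proof.
  revert x y; induction L as [|v L IH]; simpl; intros x y Hx Hy.
  - subst. apply cad_z.
  - destruct Hx as [c [x' [Hx' ->]]]. destruct Hy as [d [y' [Hy' ->]]].
    exists (Cadd c d), (cad x' y'). split; auto.
    rewrite csc_dc. rewrite <- !cad_assoc. f_equal.
    rewrite (cad_comm _ x' (cad (csc d v) y')), <- cad_assoc. f_equal. apply cad_comm. Qed.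

Lemma gspan_scal L a x : gspan L x -> gspan L (csc a x).
Proof.
  revert x; induction L as [|v L IH]; simpl; intros x Hx.
  - subst. apply csc_z.
  - destruct Hx as [c [x' [Hx' ->]]]. exists (Cmul a c), (csc a x').
    split; auto. rewrite csc_dv, csc_assoc. auto. Qed.

Lemma gspan_in L v : In v L -> gspan L v.
Proof.
  induction L as [|t L IH]; simpl; [tauto|]. intros [<-|H].
  - exists C1, cz. split; [apply gspan_z|]. rewrite csc_one, cad_z_r. auto.
  - exists C0, v. split; auto. rewrite csc_zero, cad_z. auto. Qed.

Lemma gspan_trans L1 L2 x : gspan L1 x -> (forall v, In v L1 -> gspan L2 v) -> gspan L2 x.
Proof.
  revert x; induction L1 as [|v L1 IH]; simpl; intros x Hx H.
  - subst. apply gspan_z.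
  - destruct Hx as [c [y [Hy ->]]]. apply gspan_add.
    + apply gspan_scal. auto.
    + apply IH; auto. Qed.

Lemma gspan_comb L a W : (forall w, In w W -> gspan L w) -> gspan L (comb a W).
Proof.
  induction W; simpl; intros. apply gspan_z.
  apply gspan_add; auto. apply gspan_scal; auto. Qed.

Lemma gspan_sub L x y : gspan L x -> gspan L y -> gspan L (csub x y).
Proof. intros. unfold csub. apply gspan_add; auto. apply gspan_scal; auto. Qed.

Lemma gspan_cons L a x : gspan L x -> gspan (a :: L) x.
Proof. intros. simpl. exists C0, x. split; auto. rewrite csc_zero, cad_z. auto. Qed.

Lemma gspan_orth L x t : gspan L x -> (forall w, In w L -> h w t = C0) -> h x t = C0.
Proof.
  revert x; induction L as [|v L IH]; simpl; intros x Hx H.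
  - subst. apply h_zero_l.
  - destruct Hx as [c [y [Hy ->]]]. rewrite hf_add, hf_scal, H, IH; auto. Ceq. Qed.

Lemma gspan_exact W x : ON W -> gspan W x -> x = proj W x.
Proof.
  revert x; induction W as [|w W IH]; simpl; intros x HO Hx.
  - auto.
  - destruct HO as [H1 [H2 H3]]. destruct Hx as [c [y [Hy ->]]].
    unfold proj; simpl. f_equal.
    + f_equal. rewrite hf_add, hf_scal, H1.
      rewrite (gspan_orth W y w Hy). Ceq.
      intros t Ht. rewrite hf_sym, H2 by auto. Ceq.
    + rewrite (IH y H3 Hy) at 1. unfold proj. apply comb_ext.
      intros t Ht. rewrite hf_add, hf_scal, H2 by auto.
      Ceq. Qed.

Lemma ON_in_sym W w t : ON W -> In w W -> In t W -> w <> t -> h w t = C0.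
Proof.
  induction W as [|s W IH]; simpl; [tauto|]. intros [H1 [H2 H3]] Hw Ht Hne.
  destruct Hw as [<-|Hw]; destruct Ht as [<-|Ht].
  - congruence.
  - auto.
  - rewrite hf_sym, H2 by auto. Ceq.
  - auto. Qed.


Lemma csub_self (x : X) : csub x x = cz.
Proof. unfold csub. rewrite <- (csc_one X x) at 1. rewrite <- csc_dc.
  replace (Cadd C1 Cm1) with C0 by Ceq. apply csc_zero. Qed.

Lemma res_cons_null W w x : ON (w :: W) -> Cre (h (res W x) (res W x)) = 0 ->
  Cre (h (res (w::W) x) (res (w::W) x)) = 0.
Proof. intros HO E. pose proof (res_nonneg (w::W) x) as P.
  assert (HO2 : ON W) by (destruct HO as [_ [_ ?]]; auto).
  rewrite (pyth (w::W)) in * by auto. rewrite pyth in E by auto. simpl in *.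
  pose proof (Cmod2_ge0 (h x w)). lra. Qed.

Lemma GS (vf : nat -> X) (idx : list nat) : NoDup idx ->
  exists (W : list X) (F : list nat),
  ON W /\ length W = length F /\ NoDup F /\ incl F idx /\
  (forall w, In w W -> gspan (map vf idx) w) /\
  (forall n, In n idx -> Cre (h (res W (vf n)) (res W (vf n))) = 0) /\
  (forall n, In n F -> vf n = proj W (vf n)).
Proof.
  induction idx as [|n idx IH]; intros ND.
  - exists nil, nil. simpl. repeat split; try constructor; try tauto; try (intros ? []); intros ? ?; tauto.
  - inversion ND; subst. destruct (IH H2) as [W [F [HO [Hl [HF [Hinc [Hsp [Hnull Hex]]]]]]]].
    set (r := res W (vf n)).
    destruct (Req_dec (Cre (h r r)) 0) as [E|E].
    + exists W, F. refine (conj HO (conj Hl (conj HF (conj _ (conj _ (conj _ Hex)))))).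
      * intros m Hm; right; auto.
      * intros w Hw; apply gspan_cons; auto.
      * intros m [<-|Hm]; auto.
    + set (d := Cre (h r r)).
      assert (Hd : 0 < d) by (pose proof (hf_pos _ h r) as P; unfold d in *; lra).
      set (q := sqrt d).
      assert (Hq : 0 < q) by (apply sqrt_lt_R0; auto).
      assert (Hqq : d = q * q) by (unfold q; rewrite sqrt_sqrt; lra).
      set (w' := csc (RtoC (/ q)) r).
      assert (Hw'W : forall t, In t W -> h w' t = C0).
      { intros t Ht. unfold w'. rewrite hf_scal. unfold r. rewrite h_res_in by auto. Ceq. }
      assert (HtW' : forall t, In t W -> h t w' = C0).
      { intros t Ht. rewrite hf_sym, Hw'W by auto. Ceq. }
      assert (HO' : ON (w' :: W)).
      { simpl. split; [|split; auto].
        unfold w'. rewrite hf_scal, h_scal_r. rewrite (h_real r). fold d.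
        apply Cext; simpl; rewrite Hqq; field; lra. }
      assert (Hrn : h (vf n) r = RtoC d).
      { rewrite <- (csub_add (vf n) (proj W (vf n))). fold (res W (vf n)). fold r.
        rewrite hf_add. unfold proj. rewrite h_comb_orth.
        - rewrite h_real. fold d. Ceq.
        - intros t Ht. rewrite hf_sym. unfold r. rewrite h_res_in by auto. Ceq. }
      assert (Hexn : vf n = proj (w' :: W) (vf n)).
      { unfold proj; simpl. fold (proj W (vf n)).
        unfold w' at 2. rewrite csc_assoc.
        replace (Cmul (h (vf n) w') (RtoC (/ q))) with C1.
        - rewrite csc_one. unfold r, res. rewrite csub_add. auto.
        - unfold w'. rewrite h_scal_r, Hrn. apply Cext; simpl; rewrite Hqq; field; lra. }
      exists (w' :: W), (n :: F). refine (conj HO' (conj _ (conj _ (conj _ (conj _ (conj _ _)))))).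
      * simpl; congruence.
      * constructor; auto.
      * intros m [<-|Hm]; [left; auto | right; auto].
      * intros w [<-|Hw].
        -- unfold w'. apply gspan_scal. unfold r, res. apply gspan_sub.
           ++ apply gspan_in. simpl; auto.
           ++ apply gspan_comb. intros t Ht. apply gspan_cons. auto.
        -- apply gspan_cons; auto.
      * intros m [<-|Hm].
        -- unfold res. rewrite <- Hexn, csub_self, h_zero_l. reflexivity.
        -- apply res_cons_null; auto.
      * intros m [<-|Hm]; auto.
        unfold proj at 1; simpl. fold (proj W (vf m)).
        assert (E0 : h (vf m) w' = C0) by (rewrite (Hex m Hm); unfold proj; apply h_comb_orth; auto).
        rewrite E0, csc_zero, cad_z. apply Hex; auto. Qed.

End Gen.

Definition Csum (g : nat -> C) (N : nat) : C :=
  mkC (sum_f_R0 (fun k => Cre (g k)) N) (sum_f_R0 (fun k => Cim (g k)) N).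

Lemma sum_lin (u v : nat -> R) a b N :
  sum_f_R0 (fun k => a * u k + b * v k) N = a * sum_f_R0 u N + b * sum_f_R0 v N.
Proof. induction N; simpl; [ring|]. rewrite IHN. ring. Qed.

Lemma sum_ext (u v : nat -> R) N : (forall k, u k = v k) -> sum_f_R0 u N = sum_f_R0 v N.
Proof. intros; apply sum_eq; auto. Qed.

Lemma Csum_add g1 g2 N : Csum (fun k => Cadd (g1 k) (g2 k)) N = Cadd (Csum g1 N) (Csum g2 N).
Proof. unfold Csum; apply Cext; simpl; rewrite <- sum_plus; apply sum_ext; intros; simpl; ring. Qed.

Lemma Csum_scal a g N : Csum (fun k => Cmul a (g k)) N = Cmul a (Csum g N).
Proof. unfold Csum; apply Cext; simpl.
  - transitivity (sum_f_R0 (fun k => Cre a * Cre (g k) + (- Cim a) * Cim (g k)) N).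
    + apply sum_ext; intros; simpl; ring.
    + rewrite sum_lin. ring.
  - transitivity (sum_f_R0 (fun k => Cre a * Cim (g k) + Cim a * Cre (g k)) N).
    + apply sum_ext; intros; simpl; ring.
    + rewrite sum_lin. ring. Qed.

Lemma Csum_conj g N : Csum (fun k => Cconj (g k)) N = Cconj (Csum g N).
Proof. unfold Csum; apply Cext; simpl; auto.
  transitivity (sum_f_R0 (fun k => (-1) * Cim (g k) + 0 * 0) N).
  - apply sum_ext; intros; simpl; ring.
  - rewrite sum_lin. ring. Qed.

Lemma Csum_ext g1 g2 N : (forall k, (k <= N)%nat -> g1 k = g2 k) -> Csum g1 N = Csum g2 N.
Proof. intros E. unfold Csum; f_equal; apply sum_eq; intros i Hi; rewrite (E i Hi); auto. Qed.

Lemma Csum_S g N : Csum g (S N) = Cadd (Csum g N) (g (S N)).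
Proof. unfold Csum; apply Cext; simpl; reflexivity. Qed.

Lemma Csum_zero g N : (forall k, (k <= N)%nat -> g k = C0) -> Csum g N = C0.
Proof. intros E. transitivity (Csum (fun _ => C0) N).
  - apply Csum_ext. intros k Hk. apply E; auto.
  - unfold Csum; apply Cext; simpl; clear E; induction N; simpl; lra. Qed.

Lemma Csum_delta (g : nat -> C) n N : (n <= N)%nat ->
  Csum (fun k => if Nat.eqb k n then g k else C0) N = g n.
Proof.
  induction N; intros Hn.
  - assert (n = 0%nat) by lia. subst. unfold Csum; apply Cext; simpl; auto.
  - rewrite Csum_S. destruct (Nat.eq_dec n (S N)) as [->|Hne].
    + rewrite Csum_zero.
      * rewrite Nat.eqb_refl. Ceq.
      * intros k Hk. destruct (Nat.eqb_spec k (S N)); [lia|auto].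
    + rewrite IHN by lia. destruct (Nat.eqb_spec (S N) n); [lia|]. Ceq. Qed.

Definition Clim (u : nat -> C) (L : C) : Prop :=
  Un_cv (fun n => Cre (u n)) (Cre L) /\ Un_cv (fun n => Cim (u n)) (Cim L).

Lemma Clim_unique u L1 L2 : Clim u L1 -> Clim u L2 -> L1 = L2.
Proof. intros [A1 B1] [A2 B2]. apply Cext; eapply UL_sequence; eauto. Qed.

Lemma Clim_ext u v L : (forall n, u n = v n) -> Clim u L -> Clim v L.
Proof. intros E [A B0]. split; intros eps He; [destruct (A eps He) as [N HN]|destruct (B0 eps He) as [N HN]];
  exists N; intros n Hn; rewrite <- E; auto. Qed.

Lemma Clim_add u v L1 L2 : Clim u L1 -> Clim v L2 -> Clim (fun n => Cadd (u n) (v n)) (Cadd L1 L2).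
Proof. intros [A1 B1] [A2 B2]. split; simpl; apply CV_plus; auto. Qed.

Lemma cv_const r : Un_cv (fun _ => r) r.
Proof. intros e he; exists O; intros; unfold Rdist; rewrite Rminus_diag, Rabs_R0; lra. Qed.

Lemma Clim_scal a u L : Clim u L -> Clim (fun n => Cmul a (u n)) (Cmul a L).
Proof. intros [A1 B1]. split; simpl.
  - apply CV_minus; apply CV_mult; auto; apply cv_const.
  - apply CV_plus; apply CV_mult; auto; apply cv_const. Qed.

Lemma Clim_conj u L : Clim u L -> Clim (fun n => Cconj (u n)) (Cconj L).
Proof. intros [A1 B1]. split; simpl; auto. apply CV_opp in B1. exact B1. Qed.

Lemma sq_lt a e : e > 0 -> a * a < e * e -> Rabs a < e.
Proof. intros. apply Rabs_def1; nra. Qed.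

Lemma Clim_of_small u L :
  (forall eps, eps > 0 -> exists N, forall n, (n >= N)%nat ->
     Cmod2 (Cadd (u n) (Copp L)) < eps) -> Clim u L.
Proof.
  intros K. split; intros eps He; destruct (K (eps * eps)) as [N HN]; try nra;
  exists N; intros n Hn; specialize (HN n Hn); unfold Cmod2 in HN; simpl in HN;
  unfold Rdist; apply sq_lt; auto.
  - pose proof (Rle_0_sqr (Cim (u n) + - Cim L)). unfold Rsqr in *.
    replace (Cre (u n) - Cre L) with (Cre (u n) + - Cre L) by ring. lra.
  - pose proof (Rle_0_sqr (Cre (u n) + - Cre L)). unfold Rsqr in *.
    replace (Cim (u n) - Cim L) with (Cim (u n) + - Cim L) by ring. lra.
Qed.

Lemma un_cv_of_lim_ineq (u : nat -> R) : True. Proof. auto. Qed.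

Section HS.
Variable H : CHilbert.

Lemma vscal_C0 (x : H) : vscal C0 x = vzero.
Proof.
  set (y := vscal C0 x).
  assert (E : vadd y y = y).
  { unfold y. rewrite <- vscal_distr_c. f_equal. Ceq. }
  transitivity (vadd y (vadd y (vopp y))).
  - rewrite vadd_opp, vadd_comm, vadd_zero. reflexivity.
  - rewrite vadd_assoc, E, vadd_opp. reflexivity. Qed.

Definition Hcvs : CVS := {| cv := vec H; cz := vzero; cad := vadd; csc := vscal;
  cad_assoc := vadd_assoc H; cad_comm := vadd_comm H; cad_z := vadd_zero H;
  csc_assoc := vscal_assoc H; csc_one := vscal_one H; csc_dv := vscal_distr_v H;
  csc_dc := vscal_distr_c H; csc_zero := vscal_C0 |}.

Definition Hin : SForm Hcvs := Build_SForm Hcvs (@inner H) (inner_add_l H)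
  (inner_scal_l H) (inner_conj_sym H) (inner_pos H).

Lemma vopp_m1 (y : H) : vopp y = vscal Cm1 y.
Proof.
  assert (E : vadd y (vscal Cm1 y) = vzero).
  { rewrite <- (vscal_one H y) at 1. rewrite <- vscal_distr_c.
    replace (Cadd C1 Cm1) with C0 by Ceq. apply vscal_C0. }
  transitivity (vadd (vopp y) (vadd y (vscal Cm1 y))).
  - rewrite E, vadd_comm, vadd_zero. auto.
  - rewrite vadd_assoc, (vadd_comm H (vopp y) y), vadd_opp, vadd_zero. auto. Qed.

Lemma vsub_csub (x y : H) : vsub H x y = @csub Hcvs x y.
Proof. unfold vsub, csub; simpl. rewrite vopp_m1. auto. Qed.

Lemma inner_zero_l (y : H) : inner vzero y = C0.
Proof. exact (h_zero_l (Hcvs) Hin y). Qed.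
Lemma inner_zero_r (y : H) : inner y vzero = C0.
Proof. exact (h_zero_r (Hcvs) Hin y). Qed.
Lemma inner_add_r (z x y : H) : inner z (vadd x y) = Cadd (inner z x) (inner z y).
Proof. exact (h_add_r Hcvs Hin z x y). Qed.
Lemma inner_scal_r a (z x : H) : inner z (vscal a x) = Cmul (Cconj a) (inner z x).
Proof. exact (h_scal_r Hcvs Hin a z x). Qed.

Lemma inner_sub_l (x y z : H) : inner (@csub Hcvs x y) z = Cadd (inner x z) (Copp (inner y z)).
Proof. exact (h_sub_l Hcvs Hin x y z). Qed.
Lemma inner_sub_r (z x y : H) : inner z (@csub Hcvs x y) = Cadd (inner z x) (Copp (inner z y)).
Proof. exact (h_sub_r Hcvs Hin z x y). Qed.
Lemma inner_CS (x y : H) : Cmod2 (inner x y) <= Cre (inner x x) * Cre (inner y y).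
Proof. exact (CS Hcvs Hin x y). Qed.

Lemma inner_im0 (x : H) : Cim (inner x x) = 0.
Proof. apply (h_im0 Hcvs Hin). Qed.

Lemma inner_zero_eq (x : H) : Cre (inner x x) = 0 -> x = vzero.
Proof. intro E. apply inner_def. apply Cext; simpl; auto. apply inner_im0. Qed.

Lemma vnorm_sq (x : H) : vnorm H x ^ 2 = Cre (inner x x).
Proof. unfold vnorm. simpl. rewrite Rmult_1_r. apply sqrt_sqrt. apply inner_pos. Qed.

Fixpoint rsum (g : nat -> H) (N : nat) : H :=
  match N with O => g O | S N' => vadd (rsum g N') (g (S N')) end.

Lemma psum_rsum f x N : frame_psum H f x N = rsum (fun n => vscal (inner x (f n)) (f n)) N.
Proof. induction N; simpl; auto. rewrite IHN; auto. Qed.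

Lemma inner_rsum_l g N y : inner (rsum g N) y = Csum (fun k => inner (g k) y) N.
Proof. induction N; simpl.
  - unfold Csum; apply Cext; simpl; auto.
  - rewrite inner_add_l, IHN, Csum_S. auto. Qed.

End HS.

Definition Fn : CVS.
Proof.
  refine {| cv := nat -> C; cz := fun _ => C0; cad := fun a b k => Cadd (a k) (b k);
            csc := fun c a k => Cmul c (a k) |};
  intros; apply functional_extensionality; intros; Ceq.
Defined.

Definition stdf (M : nat) : SForm Fn.
Proof.
  refine (Build_SForm Fn (fun a b => Csum (fun k => Cmul (a k) (Cconj (b k))) M) _ _ _ _).
  - intros. simpl. rewrite <- Csum_add. apply Csum_ext; intros; Ceq.
  - intros. simpl. rewrite <- Csum_scal. apply Csum_ext; intros; Ceq.
  - intros. simpl. rewrite <- Csum_conj. apply Csum_ext; intros; Ceq.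
  - intros. unfold Csum; simpl. apply cond_pos_sum. intros; simpl. nra.
Defined.

Lemma stdf_re M a : Cre (stdf M a a) = sum_f_R0 (fun k => Cmod2 (a k)) M.
Proof. simpl. unfold Csum; simpl. apply sum_ext; intros; unfold Cmod2; simpl; ring. Qed.

Section Gen2.
Variable X : CVS.
Variable h : SForm X.
Lemma h_scal_self c x : Cre (h (csc c x) (csc c x)) = Cmod2 c * Cre (h x x).
Proof. rewrite hf_scal, h_scal_r. pose proof (h_im0 X h x). unfold Cmod2; simpl. rewrite H. ring. Qed.

Lemma csub_swap (x y : X) : csub X y x = csc Cm1 (csub X x y).
Proof. unfold csub. rewrite csc_dv, csc_assoc.
  replace (Cmul Cm1 Cm1) with C1 by Ceq. rewrite csc_one. apply cad_comm. Qed.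

Lemma h_sub_sym x y : Cre (h (csub X x y) (csub X x y)) = Cre (h (csub X y x) (csub X y x)).
Proof. rewrite csub_swap, h_scal_self. unfold Cmod2; simpl. ring. Qed.
End Gen2.

Lemma inner_sub_sym (H : CHilbert) (x y : H) :
  Cre (inner (@csub (Hcvs H) x y) (@csub (Hcvs H) x y)) = Cre (inner (@csub (Hcvs H) y x) (@csub (Hcvs H) y x)).
Proof. exact (h_sub_sym (Hcvs H) (Hin H) x y). Qed.

Lemma Cmod2_re_le (z : C) : Cre z * Cre z <= Cmod2 z.
Proof. unfold Cmod2; nra. Qed.

Lemma in_span_gspan (H : CHilbert) (l : list H) x : in_span H l x -> gspan (Hcvs H) l x.
Proof.
  revert x; induction l as [|v l IH]; simpl; intros x Hx; auto;
  try (destruct Hx as [c [y [Hy E]]]; exists c, y; split; auto). Qed.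

Lemma map_nth_seq {A} (l : list A) d : map (fun n => nth n l d) (seq 0 (length l)) = l.
Proof.
  induction l as [|a l IH]; simpl; auto. f_equal. rewrite <- seq_shift, map_map. simpl. auto. Qed.

Lemma lim_le (u : nat -> R) L c : Un_cv u L -> (forall n, u n <= c) -> L <= c.
Proof. intros Hu Hc. destruct (Rle_dec L c) as [?|Hn]; auto. exfalso.
  destruct (Hu (L - c)) as [N HN]; [lra|]. specialize (HN N (le_n _)). specialize (Hc N).
  unfold Rdist in HN. apply Rabs_def2 in HN. lra. Qed.

Lemma lim_ge (u : nat -> R) L c : Un_cv u L -> (forall n, c <= u n) -> c <= L.
Proof. intros Hu Hc. destruct (Rle_dec c L) as [?|Hn]; auto. exfalso.
  destruct (Hu (c - L)) as [N HN]; [lra|]. specialize (HN N (le_n _)). specialize (Hc N).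
  unfold Rdist in HN. apply Rabs_def2 in HN. lra. Qed.

Section Main.
Variable H : CHilbert.
Variable f : nat -> H.
Variable B : R.
Variables A0 : R.
Hypothesis HA0 : 0 < A0.
Hypothesis Hfr : forall x, exists s, infinite_sum (frame_terms H (fun _ => true) f x) s /\
  A0 * vnorm H x ^ 2 <= s.
Hypothesis Hopt : optimal_upper_frame_bound H f B.
Hypothesis Hinf : infinite_dimensional H.
Variable l : list H.
Hypothesis Hl : forall x y, frame_op_at H f x y -> in_span H l (vsub H (vscal (RtoC B) x) y).


Definition p (x : H) n := Cmod2 (inner x (f n)).

Lemma p_ge0 x n : 0 <= p x n.
Proof. apply Cmod2_ge0. Qed.

Lemma ft_p x : frame_terms H (fun _ => true) f x = p x.
Proof. reflexivity. Qed.

Lemma nx_pos (x : H) : x <> vzero -> 0 < Cre (inner x x).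
Proof. intros Hx. pose proof (inner_pos H x). destruct (Req_dec (Cre (inner x x)) 0) as [E|E]; [|lra].
  exfalso. apply Hx. apply inner_zero_eq; auto. Qed.

Lemma ex_nonzero : exists x : H, x <> vzero.
Proof. apply NNPP. intro K. apply Hinf. exists nil. intro x. simpl.
  apply NNPP. intro K2. apply K. exists x. auto. Qed.

Lemma frame_low x : exists s, Un_cv (sum_f_R0 (p x)) s /\ A0 * Cre (inner x x) <= s.
Proof. destruct (Hfr x) as [s [Hs Hl1]]. exists s. rewrite vnorm_sq in Hl1. split; auto. Qed.

Lemma A0_le_B : A0 <= B.
Proof.
  destruct Hopt as [_ H2]. apply H2. intros B' HB'.
  destruct ex_nonzero as [x Hx]. destruct (HB' x) as [s' [Hs' Hle]].
  destruct (frame_low x) as [s [Hs Hge]].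
  assert (s = s') by (eapply UL_sequence; eauto). subst.
  rewrite vnorm_sq in Hle. pose proof (nx_pos x Hx).
  assert (A0 * Cre (inner x x) <= B' * Cre (inner x x)) by lra. nra. Qed.

Lemma B_pos : 0 < B.
Proof. pose proof A0_le_B. lra. Qed.

Lemma bessel x N : sum_f_R0 (p x) N <= B * Cre (inner x x).
Proof.
  destruct (Rle_dec (sum_f_R0 (p x) N) (B * Cre (inner x x))) as [?|Hn]; auto. exfalso.
  destruct (classic (x = vzero)) as [->|Hx].
  - assert (sum_f_R0 (p vzero) N = 0).
    { transitivity (sum_f_R0 (fun _ => 0) N).
      - apply sum_ext. intro k. unfold p. rewrite inner_zero_l. unfold Cmod2; simpl; ring.
      - clear Hn; induction N; simpl; lra. }
    rewrite inner_zero_l in Hn. simpl in Hn. lra.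
  - pose proof (nx_pos x Hx). set (nx := Cre (inner x x)) in *. set (S0 := sum_f_R0 (p x) N) in *.
    set (B' := (S0 / nx + B) / 2).
    assert (HB' : B < B').
    { unfold B'. assert (B * nx < S0) by lra. assert (B < S0 / nx).
      { apply (Rmult_lt_reg_r nx); auto. unfold Rdiv. rewrite Rmult_assoc, Rinv_l; lra. }
      lra. }
    destruct Hopt as [H1 H2]. assert (B' <= B); [|lra].
    apply H2. intros B'' HB''. pose proof (H1 B'' HB''). destruct (HB'' x) as [s [Hs Hle]].
    rewrite vnorm_sq in Hle. fold nx in Hle.
    assert (S0 <= s) by (apply sum_incr; auto; apply p_ge0).
    assert (S0 / nx <= B'').
    { apply (Rmult_le_reg_r nx); auto. unfold Rdiv. rewrite Rmult_assoc, Rinv_l; lra. }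
    unfold B'. lra. Qed.

Lemma frame_sum x : exists s, Un_cv (sum_f_R0 (p x)) s /\ A0 * Cre (inner x x) <= s /\ s <= B * Cre (inner x x).
Proof. destruct (frame_low x) as [s [Hs Hl1]]. exists s. repeat split; auto.
  eapply lim_le; eauto. apply bessel. Qed.

Definition T (M : nat) (a : nat -> C) : H := rsum H (fun k => vscal (a k) (f k)) M.

Lemma inner_T_l M a y : inner (T M a) y = Csum (fun k => Cmul (a k) (inner (f k) y)) M.
Proof. unfold T. rewrite inner_rsum_l. apply Csum_ext; intros; apply inner_scal_l. Qed.

Lemma T_bound M a : Cre (inner (T M a) (T M a)) <= B * Cre (stdf M a a).
Proof.
  set (y := T M a).
  set (b := fun k => inner y (f k)).
  assert (E : inner y y = stdf M a b).
  { unfold y at 1. rewrite inner_T_l. simpl. apply Csum_ext. intros. unfold b.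
    rewrite (inner_conj_sym H y (f k)). apply Cext; simpl; ring. }
  pose proof (CS Fn (stdf M) a b) as Hcs. rewrite <- E in Hcs.
  assert (Hb : Cre (stdf M b b) <= B * Cre (inner y y)).
  { rewrite stdf_re. apply bessel. }
  pose proof (inner_im0 H y). pose proof (inner_pos H y).
  pose proof (hf_pos _ (stdf M) a). pose proof (B_pos).
  unfold Cmod2 in Hcs. rewrite H0 in Hcs.
  set (ny := Cre (inner y y)) in *. set (na := Cre (stdf M a a)) in *.
  destruct (Req_dec ny 0) as [Z|Z]; [rewrite Z; nra|].
  assert (ny * ny <= na * (B * ny)) by (pose proof (hf_pos _ (stdf M) b); nra).
  nra. Qed.

Lemma rsum_zero M : rsum H (fun k => vscal C0 (f k)) M = vzero.
Proof. induction M; simpl; rewrite vscal_C0; auto. rewrite IHM. apply vadd_zero. Qed.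

Lemma rsum_ext g1 g2 M : (forall k, (k <= M)%nat -> g1 k = g2 k) -> rsum H g1 M = rsum H g2 M.
Proof. induction M; intros E; simpl. apply E; auto. rewrite IHM by auto. rewrite E; auto. Qed.

Lemma rsum_S g M : rsum H g (S M) = vadd (rsum H g M) (g (S M)).
Proof. reflexivity. Qed.
Lemma psum_S x M : frame_psum H f x (S M) = vadd (frame_psum H f x M) (vscal (inner x (f (S M))) (f (S M))).
Proof. reflexivity. Qed.

Definition cx x k := inner x (f k).

Lemma psum_diff x n m : (n <= m)%nat ->
  @csub (Hcvs H) (frame_psum H f x m) (frame_psum H f x n) =
  T m (fun k => if Nat.leb k n then C0 else cx x k).
Proof.
  intros Hnm. induction m.
  - assert (n = 0%nat) by lia. subst. unfold T. simpl. rewrite vscal_C0.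
    apply (csub_self (Hcvs H)).
  - destruct (Nat.eq_dec n (S m)) as [->|Hne].
    + unfold T. transitivity (@cz (Hcvs H)).
      * apply (csub_self (Hcvs H)).
      * symmetry. simpl. rewrite Nat.leb_refl.
        replace (rsum H (fun k => vscal (if Nat.leb k (S m) then C0 else cx x k) (f k)) m)
          with (rsum H (fun k => vscal C0 (f k)) m).
        -- rewrite rsum_zero, vscal_C0. apply vadd_zero.
        -- apply rsum_ext. intros k Hk. rewrite (proj2 (Nat.leb_le k (S m))) by lia. auto.
    + specialize (IHm ltac:(lia)). unfold T in *. rewrite rsum_S, psum_S.
      assert (Hl2 : Nat.leb (S m) n = false) by (apply Nat.leb_gt; lia). rewrite Hl2. rewrite <- IHm.
      unfold csub. simpl. rewrite <- !(vadd_assoc H). f_equal. apply vadd_comm. Qed.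

Lemma diff_coeffs x n m : (n <= m)%nat ->
  Cre (stdf m (fun k => if Nat.leb k n then C0 else cx x k) (fun k => if Nat.leb k n then C0 else cx x k))
  = sum_f_R0 (p x) m - sum_f_R0 (p x) n.
Proof.
  intros Hnm. rewrite stdf_re. induction m.
  - assert (n = 0%nat) by lia. subst. simpl. unfold Cmod2; simpl. ring.
  - destruct (Nat.eq_dec n (S m)) as [->|Hne].
    + simpl. rewrite Nat.leb_refl. unfold Cmod2 at 2; simpl.
      transitivity 0. 2: ring.
      replace (sum_f_R0 (fun k => Cmod2 (if Nat.leb k (S m) then C0 else cx x k)) m) with (sum_f_R0 (fun _ => 0) m).
      * clear; induction m; simpl; lra.
      * apply sum_eq. intros k Hk. replace (Nat.leb k (S m)) with true by (symmetry; apply Nat.leb_le; lia).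
        unfold Cmod2; simpl; ring.
    + rewrite !tech5. rewrite IHm by lia. replace (Nat.leb (S m) n) with false by (symmetry; apply Nat.leb_gt; lia).
      unfold p, cx. ring. Qed.

Lemma S_ex x : exists y, frame_op_at H f x y.
Proof.
  destruct (frame_sum x) as [s [Hs _]].
  pose proof B_pos as HB.
  destruct (complete H (fun n => frame_psum H f x n)) as [y Hy].
  - intros eps He.
    destruct (Hs (eps * eps / (2 * B))) as [N HN].
    { apply Rdiv_lt_0_compat; nra. }
    exists N. intros m n Hm Hn.
    assert (key : forall m n, (m >= N)%nat -> (n >= N)%nat -> (n <= m)%nat ->
       Cre (inner (@csub (Hcvs H) (frame_psum H f x m) (frame_psum H f x n)) (@csub (Hcvs H) (frame_psum H f x m) (frame_psum H f x n))) < eps * eps).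
    { clear m n Hm Hn. intros m n Hm Hn Hnm. rewrite psum_diff by auto.
      eapply Rle_lt_trans. apply T_bound. rewrite diff_coeffs by auto.
      pose proof (HN m Hm). pose proof (HN n Hn). unfold Rdist in *.
      apply Rabs_def2 in H0. apply Rabs_def2 in H1.
      assert (Hq : eps * eps / (2 * B) * (2 * B) = eps * eps) by (field; lra).
      set (q := eps * eps / (2 * B)) in *. destruct H0, H1. nra. }
    rewrite vopp_m1. change (vadd (frame_psum H f x m) (vscal Cm1 (frame_psum H f x n))) with (@csub (Hcvs H) (frame_psum H f x m) (frame_psum H f x n)).
    rewrite <- sqrt_square with (x := eps) by lra. apply sqrt_lt_1; [apply (hf_pos _ (Hin H))| nra |].
    destruct (Nat.le_ge_cases n m).
    + apply key; auto.
    + rewrite inner_sub_sym. apply key; auto.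
  - exists y. exact Hy. Qed.

Definition Sop x : H := proj1_sig (constructive_indefinite_description _ (S_ex x)).
Lemma Sop_spec x : frame_op_at H f x (Sop x).
Proof. unfold Sop. destruct (constructive_indefinite_description _ _). auto. Qed.

Lemma s_lim x y : Clim (fun N => Csum (fun n => Cmul (cx x n) (inner (f n) y)) N) (inner (Sop x) y).
Proof.
  apply Clim_of_small. intros eps He.
  set (ny := Cre (inner y y)).
  pose proof (inner_pos H y) as Hny. fold ny in Hny.
  destruct (Sop_spec x (sqrt (eps / (ny + 1)))) as [N HN].
  { apply sqrt_lt_R0. apply Rdiv_lt_0_compat; lra. }
  exists N. intros n Hn. specialize (HN n Hn).
  unfold vnorm in HN. rewrite vsub_csub in HN.
  set (d := @csub (Hcvs H) (frame_psum H f x n) (Sop x)) in *.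
  assert (Hd : Cre (inner d d) < eps / (ny + 1)).
  { apply sqrt_lt_0_alt in HN. auto. }
  assert (E : Cadd (Csum (fun k => Cmul (cx x k) (inner (f k) y)) n) (Copp (inner (Sop x) y)) = inner d y).
  { unfold d. rewrite inner_sub_l. simpl. rewrite psum_rsum, inner_rsum_l. f_equal.
    apply Csum_ext. intros. rewrite inner_scal_l. auto. }
  rewrite E. eapply Rle_lt_trans. apply inner_CS. fold ny. simpl.
  pose proof (inner_pos H d).
  assert (Cre (inner d d) * (ny + 1) < eps).
  { apply (Rmult_lt_compat_r (ny + 1)) in Hd; [|lra]. unfold Rdiv in Hd.
    rewrite Rmult_assoc, Rinv_l in Hd; lra. }
  nra. Qed.


End Main.

Definition Cmod' (a : C) := sqrt (Cmod2 a).

Lemma Cmod'_mul a b : Cmod' (Cmul a b) = Cmod' a * Cmod' b.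
Proof. unfold Cmod'. rewrite Cmod2_mul. apply sqrt_mult; apply Cmod2_ge0. Qed.

Lemma Cmod'_add a b : Cmod' (Cadd a b) <= Cmod' a + Cmod' b.
Proof.
  unfold Cmod'. pose proof (sqrt_pos (Cmod2 a)). pose proof (sqrt_pos (Cmod2 b)).
  apply Rsqr_incr_0_var; [|lra]. rewrite Rsqr_sqrt by apply Cmod2_ge0. unfold Rsqr.
  pose proof (sqrt_sqrt (Cmod2 a) (Cmod2_ge0 a)). pose proof (sqrt_sqrt (Cmod2 b) (Cmod2_ge0 b)).
  assert (L : (Cre a * Cre b + Cim a * Cim b) <= sqrt (Cmod2 a) * sqrt (Cmod2 b)).
  { rewrite <- sqrt_mult by apply Cmod2_ge0.
    destruct (Rle_dec (Cre a * Cre b + Cim a * Cim b) 0); [pose proof (sqrt_pos (Cmod2 a * Cmod2 b)); lra|].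
    rewrite <- (sqrt_square (Cre a * Cre b + Cim a * Cim b)) by lra. apply sqrt_le_1; [nra | apply Rmult_le_pos; apply Cmod2_ge0 | ].
    assert (E : Cmod2 a * Cmod2 b = (Cre a * Cre b + Cim a * Cim b) * (Cre a * Cre b + Cim a * Cim b)
       + (Cre a * Cim b - Cim a * Cre b) * (Cre a * Cim b - Cim a * Cre b)) by (unfold Cmod2; ring).
    rewrite E. pose proof (Rle_0_sqr (Cre a * Cim b - Cim a * Cre b)). unfold Rsqr in *. lra. }
  unfold Cmod2 in *; simpl in *. nra. Qed.

Lemma Cmod'_ge0 a : 0 <= Cmod' a.
Proof. apply sqrt_pos. Qed.

Lemma Cmod'_sq a : Cmod' a * Cmod' a = Cmod2 a.
Proof. apply sqrt_sqrt, Cmod2_ge0. Qed.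

Lemma real_cs_step x y S P Q : 0 <= P -> 0 <= Q -> S * S <= P * Q ->
  (x * y + S) * (x * y + S) <= (x * x + P) * (y * y + Q).
Proof.
  intros HP HQ HS.
  set (u := x * x * Q + y * y * P). set (t := 2 * x * y * S).
  assert (E : u * u - t * t = (x * x * Q - y * y * P) * (x * x * Q - y * y * P) + 4 * ((x * x) * (y * y) * (P * Q - S * S))) by (unfold u, t; ring).
  assert (N1 : 0 <= (x * x) * (y * y) * (P * Q - S * S)).
  { apply Rmult_le_pos; [apply Rmult_le_pos; apply Rle_0_sqr|lra]. }
  pose proof (Rle_0_sqr (x * x * Q - y * y * P)). unfold Rsqr in *.
  assert (Hu : 0 <= u).
  { unfold u. pose proof (Rle_0_sqr x). pose proof (Rle_0_sqr y). unfold Rsqr in *.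
    assert (0 <= x * x * Q) by (apply Rmult_le_pos; auto). assert (0 <= y * y * P) by (apply Rmult_le_pos; auto). lra. }
  assert (Ht : t <= u).
  { apply Rsqr_incr_0_var; auto. unfold Rsqr. lra. }
  assert (F : (x * x + P) * (y * y + Q) - (x * y + S) * (x * y + S) = (u - t) + (P * Q - S * S)) by (unfold u, t; ring).
  lra. Qed.

Section Gen3.
Variable X : CVS.

Lemma Clsum_add g1 g2 (W : list X) : Clsum X (fun w => Cadd (g1 w) (g2 w)) W = Cadd (Clsum X g1 W) (Clsum X g2 W).
Proof. induction W; simpl. Ceq. rewrite IHW. Ceq. Qed.
Lemma Clsum_scal a g (W : list X) : Clsum X (fun w => Cmul a (g w)) W = Cmul a (Clsum X g W).
Proof. induction W; simpl. Ceq. rewrite IHW. Ceq. Qed.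
Lemma Clsum_conj g (W : list X) : Clsum X (fun w => Cconj (g w)) W = Cconj (Clsum X g W).
Proof. induction W; simpl. Ceq. rewrite IHW. Ceq. Qed.
Lemma Rlsum_ext g1 g2 (W : list X) : (forall w, In w W -> g1 w = g2 w) -> Rlsum X g1 W = Rlsum X g2 W.
Proof. induction W; simpl; intros; auto. rewrite H, IHW; auto. Qed.
Lemma Rlsum_le g1 g2 (W : list X) : (forall w, g1 w <= g2 w) -> Rlsum X g1 W <= Rlsum X g2 W.
Proof. intros E; induction W; simpl; [lra|]. specialize (E a). lra. Qed.

Lemma Cmod_Clsum g (W : list X) : Cmod' (Clsum X g W) <= Rlsum X (fun w => Cmod' (g w)) W.
Proof. induction W; simpl.
  - unfold Cmod', Cmod2; simpl. rewrite Rmult_0_l, Rplus_0_l, sqrt_0. lra.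
  - eapply Rle_trans. apply Cmod'_add. lra. Qed.

Lemma list_cs u v (W : list X) :
  Rlsum X (fun w => u w * v w) W * Rlsum X (fun w => u w * v w) W <=
  Rlsum X (fun w => u w * u w) W * Rlsum X (fun w => v w * v w) W.
Proof. induction W; simpl; [lra|]. apply real_cs_step; auto.
  - apply Rlsum_ge0. intros; nra.
  - apply Rlsum_ge0. intros; nra. Qed.

Lemma Clsum_cs a b (W : list X) :
  Cmod2 (Clsum X (fun w => Cmul (a w) (b w)) W) <=
  Rlsum X (fun w => Cmod2 (a w)) W * Rlsum X (fun w => Cmod2 (b w)) W.
Proof.
  rewrite <- Cmod'_sq.
  pose proof (Cmod_Clsum (fun w => Cmul (a w) (b w)) W) as K.
  pose proof (Cmod'_ge0 (Clsum X (fun w => Cmul (a w) (b w)) W)).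
  eapply Rle_trans. apply Rmult_le_compat; eauto.
  rewrite (Rlsum_ext _ (fun w => Cmod' (a w) * Cmod' (b w))) by (intros; apply Cmod'_mul).
  rewrite (Rlsum_ext (fun w => Cmod2 (a w)) (fun w => Cmod' (a w) * Cmod' (a w))) by (intros; symmetry; apply Cmod'_sq).
  rewrite (Rlsum_ext (fun w => Cmod2 (b w)) (fun w => Cmod' (b w) * Cmod' (b w))) by (intros; symmetry; apply Cmod'_sq).
  apply list_cs. Qed.
End Gen3.

Lemma Un_cv_ext u v L : (forall n, u n = v n) -> Un_cv u L -> Un_cv v L.
Proof. intros E Hu eps He. destruct (Hu eps He) as [N HN]. exists N. intros. rewrite <- E. auto. Qed.

Lemma real_ineq B a b p q : B > 0 ->
  (b * q + a * p) * (b * q + a * p) <= (B * (b * b) + a * a) * (/ B * (q * q) + p * p).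
Proof. intros HB.
  assert ((B * (b * b) + a * a) * (/ B * (q * q) + p * p) - (b * q + a * p) * (b * q + a * p) =
    (B * b * p - a * q) * (B * b * p - a * q) * / B) by (field; lra).
  assert (0 <= (B * b * p - a * q) * (B * b * p - a * q) * / B).
  { apply Rmult_le_pos; [apply Rle_0_sqr|]. left; apply Rinv_0_lt_compat; lra. }
  lra. Qed.

Section Main2.
Variable H : CHilbert.
Variable f : nat -> H.
Variable B : R.
Variables A0 : R.
Hypothesis HA0 : 0 < A0.
Hypothesis Hfr : forall x, exists s, infinite_sum (frame_terms H (fun _ => true) f x) s /\
  A0 * vnorm H x ^ 2 <= s.
Hypothesis Hopt : optimal_upper_frame_bound H f B.
Hypothesis Hinf : infinite_dimensional H.
Variable l : list H.
Hypothesis Hl : forall x y, frame_op_at H f x y -> in_span H l (vsub H (vscal (RtoC B) x) y).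

Notation Sop := (Sop H f B A0 HA0 Hfr Hopt Hinf).
Notation p := (p H f).
Notation cx := (cx H f).
Notation T := (T H f).

Lemma HB : 0 < B.
Proof. exact (B_pos H f B A0 HA0 Hfr Hopt Hinf). Qed.

Definition sf (x y : H) : C := inner (Sop x) y.

Lemma sl x y : Clim (fun N => Csum (fun n => Cmul (cx x n) (inner (f n) y)) N) (sf x y).
Proof. exact (s_lim H f B A0 HA0 Hfr Hopt Hinf x y). Qed.

Lemma cx_def x n : cx x n = inner x (f n).
Proof. reflexivity. Qed.

Lemma sf_add x x' y : sf (vadd x x') y = Cadd (sf x y) (sf x' y).
Proof.
  apply (Clim_unique (fun N => Csum (fun n => Cmul (cx (vadd x x') n) (inner (f n) y)) N)).
  - apply sl.
  - eapply Clim_ext; [|apply Clim_add; [apply (sl x y)|apply (sl x' y)]].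
    intro N. simpl. rewrite <- Csum_add. apply Csum_ext. intros.
    rewrite !cx_def, inner_add_l. Ceq. Qed.

Lemma sf_scal a x y : sf (vscal a x) y = Cmul a (sf x y).
Proof.
  apply (Clim_unique (fun N => Csum (fun n => Cmul (cx (vscal a x) n) (inner (f n) y)) N)).
  - apply sl.
  - eapply Clim_ext; [|apply Clim_scal; apply (sl x y)].
    intro N. simpl. rewrite <- Csum_scal. apply Csum_ext. intros.
    rewrite !cx_def, inner_scal_l. Ceq. Qed.

Lemma sf_sym x y : sf y x = Cconj (sf x y).
Proof.
  apply (Clim_unique (fun N => Csum (fun n => Cmul (cx y n) (inner (f n) x)) N)).
  - apply sl.
  - eapply Clim_ext; [|apply Clim_conj; apply (sl x y)].
    intro N. simpl. rewrite <- Csum_conj. apply Csum_ext. intros.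
    rewrite !cx_def. rewrite (inner_conj_sym H x (f k)), (inner_conj_sym H y (f k)). Ceq. Qed.

Lemma sf_lim_p x : Un_cv (sum_f_R0 (p x)) (Cre (sf x x)).
Proof.
  destruct (sl x x) as [L _]. eapply Un_cv_ext; [|exact L].
  intro N. simpl. apply sum_ext. intro k. rewrite cx_def, (inner_conj_sym H x (f k)).
  unfold p, Cmod2; simpl. ring. Qed.

Lemma sf_pos x : 0 <= Cre (sf x x).
Proof. eapply lim_ge. apply sf_lim_p. intros. apply cond_pos_sum. intros; apply p_ge0. Qed.

Definition sform : SForm (Hcvs H) := Build_SForm (Hcvs H) sf sf_add sf_scal sf_sym sf_pos.

Lemma sf_bounds x : A0 * Cre (inner x x) <= Cre (sf x x) /\ Cre (sf x x) <= B * Cre (inner x x).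
Proof.
  destruct (frame_sum H f B A0 Hfr Hopt x) as [s [Hs [H1 H2]]].
  assert (s = Cre (sf x x)) by (eapply UL_sequence; [exact Hs | apply sf_lim_p]). subst. auto. Qed.

Lemma sf_psum x N : sum_f_R0 (p x) N <= Cre (sf x x).
Proof. apply sum_incr. apply sf_lim_p. intros; apply p_ge0. Qed.

Definition kv x : H := @csub (Hcvs H) (vscal (RtoC B) x) (Sop x).

Lemma kv_span x : gspan (Hcvs H) l (kv x).
Proof. apply in_span_gspan. unfold kv. rewrite <- vsub_csub. apply Hl.
  apply (Sop_spec H f B A0 HA0 Hfr Hopt Hinf). Qed.

Lemma sf_k x y : sf x y = Cadd (Cmul (RtoC B) (inner x y)) (Copp (inner (kv x) y)).
Proof. unfold kv. rewrite inner_sub_l, inner_scal_l. unfold sf. Ceq. Qed.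

Lemma sf_add_r z x y : sf z (vadd x y) = Cadd (sf z x) (sf z y).
Proof. exact (h_add_r (Hcvs H) sform z x y). Qed.
Lemma sf_scal_r a z x : sf z (vscal a x) = Cmul (Cconj a) (sf z x).
Proof. exact (h_scal_r (Hcvs H) sform a z x). Qed.

Definition perpl (w : H) := forall t, In t l -> inner t w = C0.

Lemma perp_span v w : perpl w -> gspan (Hcvs H) l v -> inner v w = C0.
Proof. intros Hp Hv. exact (gspan_orth (Hcvs H) (Hin H) l v w Hv Hp). Qed.

Lemma perp_span' v w : perpl w -> gspan (Hcvs H) l v -> inner w v = C0.
Proof. intros. rewrite inner_conj_sym, (perp_span v w) by auto. Ceq. Qed.

Lemma DEC v w : gspan (Hcvs H) l v -> perpl w ->
  Cre (sf (vadd v w) (vadd v w)) = Cre (sf v v) + B * Cre (inner w w).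
Proof.
  intros Hv Hw.
  assert (E1 : sf v w = C0).
  { rewrite sf_k, (perp_span v w), (perp_span (kv v) w) by (auto; apply kv_span). Ceq. }
  assert (E2 : sf w v = C0) by (rewrite sf_sym, E1; Ceq).
  assert (E3 : sf w w = Cmul (RtoC B) (inner w w)).
  { rewrite sf_k, (perp_span (kv w) w) by (auto; apply kv_span). Ceq. }
  rewrite sf_add, !sf_add_r, E1, E2, E3. simpl. ring. Qed.

Section Proj.
Variables U Z : list H.
Hypothesis HU_on : ON (Hcvs H) (Hin H) U.
Hypothesis HU_sp : forall u, In u U -> gspan (Hcvs H) l u.
Hypothesis HlU : forall t, In t l -> gspan (Hcvs H) U t.
Hypothesis HZ_on : ON (Hcvs H) sform Z.
Hypothesis HZ_sp : forall z, In z Z -> gspan (Hcvs H) l z.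
Hypothesis HlZ : forall t, In t l -> gspan (Hcvs H) Z t.

Definition rU (y : H) : H := res (Hcvs H) (Hin H) U y.
Definition pU (y : H) : H := proj (Hcvs H) (Hin H) U y.

Lemma rU_U x u : In u U -> inner (rU x) u = C0.
Proof. intros. exact (h_res_in (Hcvs H) (Hin H) U x u HU_on H0). Qed.

Lemma rU_spanU x v : gspan (Hcvs H) U v -> inner v (rU x) = C0.
Proof. intros Hv. apply (gspan_orth (Hcvs H) (Hin H) U v (rU x) Hv).
  intros u Hu. change (inner u (rU x) = C0). rewrite inner_conj_sym, rU_U by auto. Ceq. Qed.

Lemma rU_perp x : perpl (rU x).
Proof. intros t Ht. apply rU_spanU. auto. Qed.

Lemma pU_spanU x : gspan (Hcvs H) U (pU x).
Proof. apply gspan_comb. intros; apply gspan_in; auto. Qed.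

Lemma pU_span x : gspan (Hcvs H) l (pU x).
Proof. apply gspan_comb. auto. Qed.

Lemma decomp x : x = vadd (rU x) (pU x).
Proof. symmetry. exact (csub_add (Hcvs H) x (pU x)). Qed.

Lemma rU_inner x y : inner (rU x) y = inner (rU x) (rU y).
Proof. rewrite (decomp y) at 1. rewrite inner_add_r.
  rewrite (inner_conj_sym H (pU y) (rU x)) at 1. rewrite (rU_spanU x (pU y) (pU_spanU y)). Ceq. Qed.

Lemma rU_inner' x y : inner x (rU y) = inner (rU x) (rU y).
Proof. rewrite (decomp x) at 1. rewrite inner_add_l, (rU_spanU y (pU x) (pU_spanU x)). Ceq. Qed.

Lemma rU_le x : Cre (inner (rU x) (rU x)) <= Cre (inner x x).
Proof. pose proof (pyth (Hcvs H) (Hin H) U x HU_on). unfold rU. simpl in *. rewrite H0.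
  assert (0 <= Rlsum (Hcvs H) (fun w : H => Cmod2 (inner x w)) U) by (apply Rlsum_ge0; intros; apply Cmod2_ge0). lra. Qed.

Definition Phi (x y : H) : C :=
  Cadd (Cmul (RtoC (/ B)) (inner (rU x) (rU y))) (Clsum (Hcvs H) (fun z => Cmul (inner x z) (inner z y)) Z).

Lemma Phi_alt x y : Phi x y =
  Cadd (Cmul (RtoC (/ B)) (inner x (rU y))) (Clsum (Hcvs H) (fun z => Cmul (inner x z) (inner z y)) Z).
Proof. unfold Phi. rewrite (rU_inner' x y). auto. Qed.

Lemma Phi_add x x' y : Phi (vadd x x') y = Cadd (Phi x y) (Phi x' y).
Proof. rewrite !Phi_alt, inner_add_l.
  rewrite (Clsum_ext (Hcvs H) _ (fun z => Cadd (Cmul (inner x z) (inner z y)) (Cmul (inner x' z) (inner z y)))).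
  - rewrite Clsum_add. Ceq.
  - intros. rewrite inner_add_l. Ceq. Qed.

Lemma Phi_scal a x y : Phi (vscal a x) y = Cmul a (Phi x y).
Proof. rewrite !Phi_alt, inner_scal_l.
  rewrite (Clsum_ext (Hcvs H) _ (fun z => Cmul a (Cmul (inner x z) (inner z y)))).
  - rewrite Clsum_scal. Ceq.
  - intros. rewrite inner_scal_l. Ceq. Qed.

Lemma Phi_sym x y : Phi y x = Cconj (Phi x y).
Proof. unfold Phi. rewrite (inner_conj_sym H (rU x) (rU y)).
  rewrite (Clsum_ext (Hcvs H) _ (fun z => Cconj (Cmul (inner x z) (inner z y)))).
  - rewrite Clsum_conj. Ceq.
  - intros z Hz. rewrite (inner_conj_sym H z y), (inner_conj_sym H z x). Ceq. Qed.

Lemma Clsum_re_sq y (W : list H) :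
  Cre (Clsum (Hcvs H) (fun z => Cmul (inner y z) (inner z y)) W) = Rlsum (Hcvs H) (fun z => Cmod2 (inner y z)) W.
Proof. induction W as [|a W IH]; simpl; auto. rewrite (inner_conj_sym H a y).
  unfold Cmod2 at 1; simpl. f_equal; [ring | exact IH]. Qed.

Lemma Phi_re y : Cre (Phi y y) = / B * Cre (inner (rU y) (rU y)) + Rlsum (Hcvs H) (fun z => Cmod2 (inner y z)) Z.
Proof. unfold Phi. rewrite <- Clsum_re_sq. simpl. rewrite (inner_im0 H (rU y)). ring. Qed.

Lemma Phi_pos y : 0 <= Cre (Phi y y).
Proof. rewrite Phi_re. pose proof HB. apply Rplus_le_le_0_compat.
  - apply Rmult_le_pos. left; apply Rinv_0_lt_compat; auto. apply inner_pos.
  - apply Rlsum_ge0. intros; apply Cmod2_ge0. Qed.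

Lemma Phi_T_l M a y : Phi (T M a) y = Csum (fun k => Cmul (a k) (Phi (f k) y)) M.
Proof. induction M.
  - unfold T; simpl. rewrite Phi_scal. unfold Csum; apply Cext; simpl; ring.
  - unfold T in *. rewrite rsum_S, Phi_add, IHM, Phi_scal, Csum_S. auto. Qed.


Definition Gp M (a b : nat -> C) : C := Phi (T M a) (T M b).

Lemma Gp_add M a a' b : Gp M (fun k => Cadd (a k) (a' k)) b = Cadd (Gp M a b) (Gp M a' b).
Proof. unfold Gp. rewrite !Phi_T_l. rewrite <- Csum_add. apply Csum_ext; intros; Ceq. Qed.
Lemma Gp_scal M c a b : Gp M (fun k => Cmul c (a k)) b = Cmul c (Gp M a b).
Proof. unfold Gp. rewrite !Phi_T_l. rewrite <- Csum_scal. apply Csum_ext; intros; Ceq. Qed.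
Lemma Gp_sym M a b : Gp M b a = Cconj (Gp M a b).
Proof. unfold Gp. apply Phi_sym. Qed.
Lemma Gp_pos M a : 0 <= Cre (Gp M a a).
Proof. apply Phi_pos. Qed.

Definition Gform M : SForm Fn := Build_SForm Fn (Gp M) (Gp_add M) (Gp_scal M) (Gp_sym M) (Gp_pos M).

Lemma inner_comb_l (a : H -> C) W y :
  inner (comb (Hcvs H) a W) y = Clsum (Hcvs H) (fun w => Cmul (a w) (inner w y)) W.
Proof. exact (h_comb_l (Hcvs H) (Hin H) a W y). Qed.

Lemma Phi_im0 y : Cim (Phi y y) = 0.
Proof. pose proof (Phi_sym y y) as E. remember (Phi y y) as z. destruct z as [zr zi].
  unfold Cconj in E. simpl in E. injection E. simpl. lra. Qed.

Lemma P1 M a : Cre (Gp M a a) <= Cre (stdf M a a).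
Proof.
  set (y := T M a).
  set (v := comb (Hcvs H) (fun z => inner y z) Z).
  set (w := vscal (RtoC (/ B)) (rU y)).
  set (xs := vadd v w).
  pose proof HB as HB0.
  assert (Hv : gspan (Hcvs H) l v) by (apply gspan_comb; auto).
  assert (Hw : perpl w).
  { intros t Ht. unfold w. rewrite inner_scal_r, (rU_perp y t Ht). Ceq. }
  assert (Ev : sf v v = RtoC (Rlsum (Hcvs H) (fun z => Cmod2 (inner y z)) Z))
    by exact (h_comb_self (Hcvs H) sform (fun z => inner y z) Z HZ_on).
  assert (Ew : Cre (inner w w) = / B * / B * Cre (inner (rU y) (rU y))).
  { unfold w. rewrite inner_scal_l, inner_scal_r. simpl. rewrite (inner_im0 H (rU y)). ring. }
  assert (Es : Cre (sf xs xs) = Cre (Phi y y)).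
  { unfold xs. rewrite DEC by auto. rewrite Ev, Ew, Phi_re. simpl. field. lra. }
  assert (Ei : inner xs y = Phi y y).
  { unfold xs. rewrite inner_add_l. unfold v. rewrite inner_comb_l.
    unfold w. rewrite inner_scal_l, (rU_inner y y). unfold Phi. apply Cext; simpl; ring. }
  set (b := fun k => inner xs (f k)).
  assert (Eb : inner y xs = stdf M a b).
  { unfold y. rewrite inner_T_l. simpl. apply Csum_ext. intros k Hk. unfold b.
    rewrite (inner_conj_sym H xs (f k)). auto. }
  assert (Hcs : Cmod2 (inner xs y) <= Cre (stdf M a a) * Cre (sf xs xs)).
  { rewrite (inner_conj_sym H y xs), Cmod2_conj, Eb.
    eapply Rle_trans. apply (CS Fn (stdf M) a b).
    apply Rmult_le_compat_l. apply (hf_pos _ (stdf M)).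
    rewrite stdf_re. apply sf_psum. }
  rewrite Ei, Es in Hcs. unfold Gp. fold y.
  pose proof (Phi_pos y) as Hp. pose proof (Phi_im0 y) as Hi.
  pose proof (hf_pos _ (stdf M) a) as Hs.
  unfold Cmod2 in Hcs. rewrite Hi in Hcs.
  set (ph := Cre (Phi y y)) in *. set (sa := Cre (stdf M a a)) in *.
  destruct (Req_dec ph 0); [lra|]. nra. Qed.

Definition Dv M (a b : nat -> C) : C := Cadd (stdf M a b) (Copp (Gp M a b)).

Lemma Dv_add M a a' b : Dv M (fun k => Cadd (a k) (a' k)) b = Cadd (Dv M a b) (Dv M a' b).
Proof. unfold Dv.
  assert (E : stdf M (fun k => Cadd (a k) (a' k)) b = Cadd (stdf M a b) (stdf M a' b)) by exact (hf_add _ (stdf M) a a' b).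
  rewrite E, Gp_add. Ceq. Qed.
Lemma Dv_scal M c a b : Dv M (fun k => Cmul c (a k)) b = Cmul c (Dv M a b).
Proof. unfold Dv.
  assert (E : stdf M (fun k => Cmul c (a k)) b = Cmul c (stdf M a b)) by exact (hf_scal _ (stdf M) c a b).
  rewrite E, Gp_scal. Ceq. Qed.
Lemma Dv_sym M a b : Dv M b a = Cconj (Dv M a b).
Proof. unfold Dv. rewrite (hf_sym _ (stdf M) a b). rewrite Gp_sym. Ceq. Qed.
Lemma Dv_pos M a : 0 <= Cre (Dv M a a).
Proof. unfold Dv. pose proof (P1 M a).
  assert (E : Cre (Cadd (stdf M a a) (Copp (Gp M a a))) = Cre (stdf M a a) - Cre (Gp M a a)) by (unfold Cadd, Copp; simpl; ring).
  rewrite E. lra. Qed.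

Definition Dform M : SForm Fn := Build_SForm Fn (Dv M) (Dv_add M) (Dv_scal M) (Dv_sym M) (Dv_pos M).

Lemma P2 x y : Cmod2 (inner x y) <= Cre (sf x x) * Cre (Phi y y).
Proof.
  pose proof HB as HB0.
  set (xV := pU x). set (xW := rU x).
  assert (Ex : inner x y = Cadd (inner xW (rU y)) (inner xV y)).
  { rewrite (decomp x) at 1. rewrite inner_add_l. rewrite (rU_inner x y). auto. }
  assert (HxV : gspan (Hcvs H) Z xV) by (apply (gspan_trans (Hcvs H) l); [apply pU_span | auto]).
  set (c := comb (Hcvs H) (fun z => sf xV z) Z).
  assert (Ec : xV = c) by exact (gspan_exact (Hcvs H) sform Z xV HZ_on HxV).
  assert (EV : inner xV y = Clsum (Hcvs H) (fun z => Cmul (sf xV z) (inner z y)) Z).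
  { transitivity (inner c y); [rewrite <- Ec; reflexivity|]. unfold c. apply inner_comb_l. }
  assert (Esv : Cre (sf xV xV) = Rlsum (Hcvs H) (fun z => Cmod2 (sf xV z)) Z).
  { transitivity (Cre (sf c c)); [rewrite <- Ec; reflexivity|]. unfold c.
    exact (f_equal Cre (h_comb_self (Hcvs H) sform (fun z => sf xV z) Z HZ_on)). }
  assert (Esx : Cre (sf x x) = Cre (sf xV xV) + B * Cre (inner xW xW)).
  { rewrite (decomp x) at 1 2. fold xW xV. rewrite (vadd_comm H xW xV). apply DEC.
    - apply pU_span.
    - apply rU_perp. }
  assert (EZ : Rlsum (Hcvs H) (fun z => Cmod2 (inner z y)) Z = Rlsum (Hcvs H) (fun z => Cmod2 (inner y z)) Z).
  { apply Rlsum_ext. intros z _. rewrite (inner_conj_sym H z y), Cmod2_conj. auto. }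
  assert (B1 : Cmod2 (inner xV y) <= Cre (sf xV xV) * Rlsum (Hcvs H) (fun z => Cmod2 (inner y z)) Z).
  { rewrite EV, Esv, <- EZ. apply Clsum_cs. }
  assert (B2 : Cmod2 (inner xW (rU y)) <= Cre (inner xW xW) * Cre (inner (rU y) (rU y))) by apply inner_CS.
  rewrite Phi_re, Esx.
  set (sv := Cre (sf xV xV)) in *. set (ww := Cre (inner xW xW)) in *.
  set (rr := Cre (inner (rU y) (rU y))) in *.
  set (zz := Rlsum (Hcvs H) (fun z => Cmod2 (inner y z)) Z) in *.
  assert (Hsv : 0 <= sv) by apply sf_pos. assert (Hww : 0 <= ww) by apply inner_pos.
  assert (Hrr : 0 <= rr) by apply inner_pos.
  assert (Hzz : 0 <= zz) by (apply Rlsum_ge0; intros; apply Cmod2_ge0).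
  assert (T1 : Cmod' (inner xW (rU y)) <= sqrt ww * sqrt rr).
  { unfold Cmod'. rewrite <- sqrt_mult by auto. apply sqrt_le_1; auto. apply Cmod2_ge0. nra. }
  assert (T2 : Cmod' (inner xV y) <= sqrt sv * sqrt zz).
  { unfold Cmod'. rewrite <- sqrt_mult by auto. apply sqrt_le_1; auto. apply Cmod2_ge0. nra. }
  pose proof (Cmod'_add (inner xW (rU y)) (inner xV y)) as T3. rewrite <- Ex in T3.
  rewrite <- Cmod'_sq.
  pose proof (Cmod'_ge0 (inner x y)).
  pose proof (real_ineq B (sqrt sv) (sqrt ww) (sqrt zz) (sqrt rr) HB0) as RI.
  rewrite !sqrt_sqrt in RI by auto.
  assert (Hm : Cmod' (inner x y) <= sqrt ww * sqrt rr + sqrt sv * sqrt zz) by lra.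
  pose proof (sqrt_pos ww). pose proof (sqrt_pos rr). pose proof (sqrt_pos sv). pose proof (sqrt_pos zz).
  eapply Rle_trans. apply Rmult_le_compat; eauto.
  eapply Rle_trans. exact RI. right. ring. Qed.


Lemma Cconj_conj z : Cconj (Cconj z) = z.
Proof. Ceq. Qed.

Definition e (n : nat) : nat -> C := fun k => if Nat.eqb k n then C1 else C0.

Lemma std_e_l M n a : (n <= M)%nat -> stdf M (e n) a = Cconj (a n).
Proof. intros Hn. change (Csum (fun k => Cmul (e n k) (Cconj (a k))) M = Cconj (a n)).
  transitivity (Csum (fun k => if Nat.eqb k n then Cconj (a k) else C0) M).
  - apply Csum_ext; intros k _; unfold e; destruct (Nat.eqb k n); Ceq.
  - apply (Csum_delta (fun k => Cconj (a k))); auto. Qed.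

Lemma Phi_T_e M n y : (n <= M)%nat -> Phi (T M (e n)) y = Phi (f n) y.
Proof. intros Hn. rewrite Phi_T_l.
  transitivity (Csum (fun k => if Nat.eqb k n then Phi (f k) y else C0) M).
  - apply Csum_ext; intros k _; unfold e; destruct (Nat.eqb k n); Ceq.
  - apply (Csum_delta (fun k => Phi (f k) y)); auto. Qed.

Lemma sum_swap (X : CVS) (g : nat -> X -> R) W M :
  sum_f_R0 (fun n => Rlsum X (fun w => g n w) W) M = Rlsum X (fun w => sum_f_R0 (fun n => g n w) M) W.
Proof. induction W as [|a W IH]; simpl.
  - clear; induction M; simpl; lra.
  - rewrite sum_plus. rewrite IH. auto. Qed.

Lemma ON_self (X : CVS) (h : SForm X) W w : ON X h W -> In w W -> h w w = C1.
Proof. induction W as [|t W IH]; simpl; [tauto|]. intros [H1 [_ H3]] [<-|Hi]; auto. Qed.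

Lemma Rlsum_one (X : CVS) (h : SForm X) W : ON X h W -> Rlsum X (fun w => Cre (h w w)) W = INR (length W).
Proof. intros HO. transitivity (Rlsum X (fun _ => 1) W).
  - apply Rlsum_ext. intros w Hw. rewrite (ON_self X h W w HO Hw). reflexivity.
  - clear HO. induction W; simpl; auto. rewrite IHW. destruct (length W); simpl; lra. Qed.

Lemma count M a : sum_f_R0 (fun n => Cmod2 (Dv M (e n) a)) M <= Cre (Dv M a a).
Proof.
  set (bb := fun k => Gp M a (e k)).
  assert (Ebb : forall k, (k <= M)%nat -> Cconj (bb k) = Phi (f k) (T M a)).
  { intros k Hk. unfold bb. rewrite Gp_sym, Cconj_conj. unfold Gp. apply Phi_T_e; auto. }
  assert (ED : forall n, (n <= M)%nat -> Dv M (e n) a = Cconj (Cadd (a n) (Copp (bb n)))).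
  { intros n Hn. unfold Dv. rewrite std_e_l by auto. unfold Gp at 1. rewrite Phi_T_e by auto.
    rewrite <- Ebb by auto. Ceq. }
  rewrite (sum_eq _ (fun n => Cmod2 ((@csub Fn a bb) n))).
  2: { intros n Hn. rewrite ED by auto. rewrite Cmod2_conj. unfold Cmod2; simpl; ring. }
  rewrite <- stdf_re.
  pose proof (h_expand Fn (stdf M) a bb Cm1) as EX. simpl in EX.
  change (Cre (stdf M (@csub Fn a bb) (@csub Fn a bb)) = Cre (stdf M a a) + 2 * (-1 * Cre (stdf M a bb) + 0 * Cim (stdf M a bb)) + Cmod2 Cm1 * Cre (stdf M bb bb)) in EX.
  assert (Eab : stdf M a bb = Gp M a a).
  { change (Csum (fun k => Cmul (a k) (Cconj (bb k))) M = Phi (T M a) (T M a)).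
    rewrite Phi_T_l. apply Csum_ext. intros k Hk. rewrite Ebb; auto. }
  assert (Ebbs : Gp M a bb = Cconj (stdf M bb bb)).
  { rewrite Gp_sym. f_equal. unfold Gp. rewrite Phi_T_l.
    change (Csum (fun k => Cmul (bb k) (Phi (f k) (T M a))) M = Csum (fun k => Cmul (bb k) (Cconj (bb k))) M).
    apply Csum_ext. intros k Hk. rewrite Ebb; auto. }
  set (sg := Cre (stdf M bb bb)). set (g := Cre (Gp M a a)).
  assert (Hsg : 0 <= sg) by apply (hf_pos _ (stdf M)).
  assert (Hg : 0 <= g) by apply Gp_pos.
  assert (Hcs : Cmod2 (Gp M a bb) <= g * Cre (Gp M bb bb)) by exact (CS Fn (Gform M) a bb).
  pose proof (P1 M bb) as P1b. fold sg in P1b.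
  assert (Hre : Cre (Gp M a bb) = sg) by (rewrite Ebbs; reflexivity).
  pose proof (Cmod2_re_le (Gp M a bb)) as Hr. rewrite Hre in Hr.
  assert (sg <= g).
  { destruct (Req_dec sg 0); [lra|].
    assert (sg * sg <= g * sg).
    { eapply Rle_trans. exact Hr. eapply Rle_trans. exact Hcs. apply Rmult_le_compat_l; lra. }
    nra. }
  rewrite EX, Eab. unfold Cmod2; simpl. fold g sg.
  unfold Dv. change (Cre (stdf M a a) + 2 * (-1 * g + 0 * Cim (Gp M a a)) + ((-1) * (-1) + 0 * 0) * sg <= Cre (stdf M a a) + - g).
  lra. Qed.

Lemma norm_comb (X : CVS) (h2 : SForm X) (al : X -> C) W :
  sqrt (Cre (h2 (comb X al W) (comb X al W))) <= Rlsum X (fun w => Cmod' (al w) * sqrt (Cre (h2 w w))) W.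
Proof. induction W as [|w W IH]; simpl.
  - rewrite (h_zero_l X h2). simpl. rewrite sqrt_0. lra.
  - eapply Rle_trans. apply tri. rewrite h_scal_self. rewrite sqrt_mult by (apply Cmod2_ge0 || apply hf_pos).
    unfold Cmod' in *. lra. Qed.

Definition inF (F : list nat) (n : nat) : bool := existsb (Nat.eqb n) F.

Lemma inF_In F n : inF F n = true <-> In n F.
Proof. unfold inF. rewrite existsb_exists. split.
  - intros [m [Hm E]]. apply Nat.eqb_eq in E. subst. auto.
  - intros Hn. exists n. split; auto. apply Nat.eqb_refl. Qed.

Lemma ax_span F g : NoDup F -> gspan Fn (map e F) (fun k => if inF F k then g k else C0).
Proof.
  induction F as [|n F IH]; intros ND; simpl.
  - apply functional_extensionality. intros k. reflexivity.
  - inversion ND; subst. exists (g n), (fun k => if inF F k then g k else C0). split; auto.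
    apply functional_extensionality. intros k. simpl. unfold inF at 1. simpl. unfold e.
    destruct (Nat.eqb_spec k n) as [->|Hne]; simpl.
    + assert (inF F n = false) by (destruct (inF F n) eqn:E; auto; apply inF_In in E; tauto).
      rewrite H0. Ceq.
    + fold (inF F k). destruct (inF F k); Ceq. Qed.

Lemma sum_sub (u v : nat -> R) N : sum_f_R0 (fun k => u k - v k) N = sum_f_R0 u N - sum_f_R0 v N.
Proof. induction N; simpl; [ring|]. rewrite IHN. ring. Qed.

Lemma Un_cv_tail u v L M : (forall n, (n >= M)%nat -> u n = v n) -> Un_cv u L -> Un_cv v L.
Proof. intros E Hu eps He. destruct (Hu eps He) as [N HN]. exists (max N M). intros n Hn.
  rewrite <- E by lia. apply HN. lia. Qed.

Lemma cbound M W a : ON Fn (Dform M) W -> gspan Fn W a ->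
  Cre (stdf M a a) <= Rlsum Fn (fun w => Cre (stdf M w w)) W * Cre (Dv M a a).
Proof.
  intros HW Ha.
  assert (Ea : a = comb Fn (fun w => Dv M a w) W) by exact (gspan_exact Fn (Dform M) W a HW Ha).
  pose proof (norm_comb Fn (stdf M) (fun w => Dv M a w) W) as Nc. rewrite <- Ea in Nc.
  pose proof (list_cs Fn (fun w => Cmod' (Dv M a w)) (fun w => sqrt (Cre (stdf M w w))) W) as LC.
  rewrite (Rlsum_ext Fn (fun w => Cmod' (Dv M a w) * Cmod' (Dv M a w)) (fun w => Cmod2 (Dv M a w))) in LC
    by (intros; apply Cmod'_sq).
  rewrite (Rlsum_ext Fn (fun w => sqrt (Cre (stdf M w w)) * sqrt (Cre (stdf M w w))) (fun w => Cre (stdf M w w))) in LC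
    by (intros; apply sqrt_sqrt; apply (hf_pos _ (stdf M))).
  assert (Py : Cre (Dv M (res Fn (Dform M) W a) (res Fn (Dform M) W a)) = Cre (Dv M a a) - Rlsum Fn (fun w => Cmod2 (Dv M a w)) W)
    by exact (pyth Fn (Dform M) W a HW).
  pose proof (Dv_pos M (res Fn (Dform M) W a)).
  set (L := Rlsum Fn (fun w => Cmod' (Dv M a w) * sqrt (Cre (stdf M w w))) W) in *.
  pose proof (sqrt_pos (Cre (stdf M a a))).
  assert (HL : Cre (stdf M a a) <= L * L).
  { rewrite <- (sqrt_sqrt (Cre (stdf M a a))) by apply (hf_pos _ (stdf M)).
    apply Rmult_le_compat; auto. }
  assert (0 <= Rlsum Fn (fun w => Cre (stdf M w w)) W) by (apply Rlsum_ge0; intros; apply (hf_pos _ (stdf M))).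
  eapply Rle_trans. exact HL. eapply Rle_trans. exact LC. rewrite Rmult_comm.
  apply Rmult_le_compat_l; auto. lra. Qed.

Lemma ind_tail F M x N : (forall n, In n F -> (n <= M)%nat) -> (N >= M)%nat ->
  sum_f_R0 (fun k => if inF F k then p x k else 0) N = sum_f_R0 (fun k => if inF F k then p x k else 0) M.
Proof. intros HF HN. induction N.
  - assert (M = 0%nat) by lia. subst. auto.
  - destruct (Nat.eq_dec (S N) M) as [<-|Hne]; auto.
    rewrite tech5, IHN by lia.
    destruct (inF F (S N)) eqn:E; [|ring]. apply inF_In, HF in E. lia. Qed.

Lemma deletable_of M F W : ON Fn (Dform M) W -> NoDup F -> (forall n, In n F -> (n <= M)%nat) ->
  (forall n, In n F -> gspan Fn W (e n)) -> deletable H f (inF F).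
Proof.
  intros HW ND HFM HFW.
  set (Wc := Rlsum Fn (fun w => Cre (stdf M w w)) W).
  assert (HWc : 0 <= Wc) by (apply Rlsum_ge0; intros; apply (hf_pos _ (stdf M))).
  pose proof HB as HB0.
  exists (A0 / (Wc + 1)), B. split; [apply Rdiv_lt_0_compat; lra|]. split; auto. intro x.
  set (ax := fun k => if inF F k then inner x (f k) else C0).
  assert (Hax : gspan Fn W ax).
  { apply (gspan_trans Fn (map e F)). apply (ax_span F (fun k => inner x (f k)) ND).
    intros v Hv. apply in_map_iff in Hv. destruct Hv as [n [<- Hn]]. auto. }
  pose proof (cbound M W ax HW Hax) as Hc. fold Wc in Hc.
  set (Q := sum_f_R0 (fun k => if inF F k then p x k else 0) M).
  assert (EQ : Cre (stdf M ax ax) = Q).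
  { rewrite stdf_re. apply sum_eq. intros k Hk. unfold ax. destruct (inF F k); auto. unfold Cmod2; simpl; ring. }
  assert (Ere : Cre (inner x (T M ax)) = Q).
  { rewrite (inner_conj_sym H (T M ax) x), inner_T_l. simpl. apply sum_eq. intros k Hk. unfold ax.
    destruct (inF F k); simpl; [|ring]. rewrite (inner_conj_sym H x (f k)). unfold p, Cmod2; simpl. ring. }
  pose proof (P2 x (T M ax)) as Hp2.
  pose proof (Cmod2_re_le (inner x (T M ax))) as Hr. rewrite Ere in Hr.
  assert (EG : Cre (Phi (T M ax) (T M ax)) = Q - Cre (Dv M ax ax)).
  { unfold Dv. rewrite <- EQ. simpl. unfold Gp. ring. }
  rewrite EG in Hp2. rewrite EQ in Hc.
  set (sx := Cre (sf x x)) in *. set (Dx := Cre (Dv M ax ax)) in *.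
  assert (Hsx : 0 <= sx) by apply sf_pos.
  assert (HDx : 0 <= Dx) by apply Dv_pos.
  assert (HQ : 0 <= Q) by (unfold Q; apply cond_pos_sum; intros; destruct (inF F n); [apply p_ge0|lra]).
  assert (Key : sx / (Wc + 1) <= sx - Q).
  { apply (Rmult_le_reg_r (Wc + 1)); [lra|]. unfold Rdiv. rewrite Rmult_assoc, Rinv_l, Rmult_1_r by lra.
    destruct (Req_dec Q 0) as [E|E]; [rewrite E; nra|].
    assert (Q * Q <= sx * (Q - Dx)) by lra.
    assert (Q <= (Wc + 1) * Dx) by nra.
    assert ((Wc + 1) * (Q * Q) <= Q * ((Wc + 1) * sx - sx)) by nra.
    assert ((Wc + 1) * Q <= (Wc + 1) * sx - sx) by nra.
    nra. }
  exists (sx - Q). split; [|split].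
  - change (Un_cv (sum_f_R0 (frame_terms H (fun n => negb (inF F n)) f x)) (sx - Q)).
    apply (Un_cv_tail (fun N => sum_f_R0 (p x) N - Q) _ _ M).
    + intros N HN. unfold Q. rewrite <- (ind_tail F M x N HFM HN), <- sum_sub. apply sum_eq.
      intros k _. unfold frame_terms. destruct (inF F k); simpl; unfold p; ring.
    + apply CV_minus. apply sf_lim_p. apply cv_const.
  - rewrite vnorm_sq. pose proof (sf_bounds x) as [Hb1 Hb2]. fold sx in Hb1.
    apply Rle_trans with (sx / (Wc + 1)); auto. unfold Rdiv.
    rewrite (Rmult_comm A0), Rmult_assoc. rewrite (Rmult_comm (/ (Wc + 1))).
    apply Rmult_le_compat_r; [left; apply Rinv_0_lt_compat; lra|]. lra.
  - rewrite vnorm_sq. pose proof (sf_bounds x) as [Hb1 Hb2]. fold sx in Hb2. lra. Qed.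

Lemma M_bound (N0 : nat) (HexN : forall S, deletable H f S -> card_le S N0) M :
  sum_f_R0 (fun n => 1 - / B * Cre (inner (f n) (f n))) M <= INR N0 + INR (length Z).
Proof.
  destruct (GS Fn (Dform M) e (seq 0 (S M)) (seq_NoDup (S M) 0)) as [W [F [HWon [Hlen [HFnd [Hinc [Hsp [Hnull Hex']]]]]]]].
  assert (HFM : forall n, In n F -> (n <= M)%nat).
  { intros n Hn. apply Hinc, in_seq in Hn. lia. }
  assert (HFW : forall n, In n F -> gspan Fn W (e n)).
  { intros n Hn. rewrite (Hex' n Hn). apply gspan_comb. intros; apply gspan_in; auto. }
  pose proof (deletable_of M F W HWon HFnd HFM HFW) as Hdel.
  pose proof (HexN _ Hdel F HFnd (fun n Hn => proj2 (inF_In F n) Hn)) as HlenF.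
  assert (StepA : sum_f_R0 (fun n => Cre (Dv M (e n) (e n))) M <= INR (length W)).
  { rewrite (sum_eq _ (fun n => Rlsum Fn (fun w => Cmod2 (Dv M (e n) w)) W)).
    - rewrite sum_swap. eapply Rle_trans. apply Rlsum_le. intro w. apply count.
      right. exact (Rlsum_one Fn (Dform M) W HWon).
    - intros n Hn.
      assert (Hin : In n (seq 0 (S M))) by (apply in_seq; lia).
      assert (Py : Cre (Dv M (res Fn (Dform M) W (e n)) (res Fn (Dform M) W (e n))) = Cre (Dv M (e n) (e n)) - Rlsum Fn (fun w => Cmod2 (Dv M (e n) w)) W)
        by exact (pyth Fn (Dform M) W (e n) HWon).
      assert (Hn0 : Cre (Dv M (res Fn (Dform M) W (e n)) (res Fn (Dform M) W (e n))) = 0) by exact (Hnull n Hin).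
      lra. }
  assert (StepB : forall n, (n <= M)%nat ->
     1 - / B * Cre (inner (f n) (f n)) - Rlsum (Hcvs H) (fun z => p z n) Z <= Cre (Dv M (e n) (e n))).
  { intros n Hn.
    assert (E1 : Cre (stdf M (e n) (e n)) = 1).
    { rewrite std_e_l by auto. unfold e. rewrite Nat.eqb_refl. reflexivity. }
    assert (E2 : Cre (Gp M (e n) (e n)) = Cre (Phi (f n) (f n))).
    { unfold Gp. rewrite Phi_T_e by auto. rewrite Phi_sym, Phi_T_e by auto. reflexivity. }
    assert (E3 : Cre (Dv M (e n) (e n)) = Cre (stdf M (e n) (e n)) - Cre (Gp M (e n) (e n))) by (unfold Dv; simpl; ring).
    rewrite E3, E1, E2, Phi_re.
    pose proof (rU_le (f n)). pose proof HB.
    assert (Rlsum (Hcvs H) (fun z => Cmod2 (inner (f n) z)) Z = Rlsum (Hcvs H) (fun z => p z n) Z).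
    { apply Rlsum_ext. intros z _. unfold p. rewrite (inner_conj_sym H z (f n)), Cmod2_conj. auto. }
    assert (/ B * Cre (inner (rU (f n)) (rU (f n))) <= / B * Cre (inner (f n) (f n))).
    { apply Rmult_le_compat_l; auto. left; apply Rinv_0_lt_compat; auto. }
    lra. }
  assert (StepZ : sum_f_R0 (fun n => Rlsum (Hcvs H) (fun z => p z n) Z) M <= INR (length Z)).
  { rewrite sum_swap. eapply Rle_trans. apply Rlsum_le. intro z. apply sf_psum.
    right. exact (Rlsum_one (Hcvs H) sform Z HZ_on). }
  assert (Hsum : sum_f_R0 (fun n => 1 - / B * Cre (inner (f n) (f n))) M - sum_f_R0 (fun n => Rlsum (Hcvs H) (fun z => p z n) Z) M
     <= sum_f_R0 (fun n => Cre (Dv M (e n) (e n))) M).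
  { rewrite <- sum_sub. apply sum_Rle. auto. }
  apply le_INR in HlenF. rewrite <- Hlen in HlenF. lra. Qed.

End Proj.
End Main2.

Lemma sum_ge_last (g : nat -> R) n : (forall k, 0 <= g k) -> g n <= sum_f_R0 g n.
Proof. intros Hg. destruct n; simpl; [lra|]. pose proof (cond_pos_sum g n Hg). lra. Qed.

Theorem proposition3p6 (H : CHilbert) (f : nat -> H) (B : R) :
  separable H -> infinite_dimensional H ->
  is_frame H f ->
  optimal_upper_frame_bound H f B ->
  finite_excess H f ->
  finite_dim_range_BI_minus_frame_op H f B ->
  exists s, infinite_sum (fun n => B - vnorm H (f n) ^ 2) s.
Proof.
  intros _ Hinf Hfr0 Hopt [N0 HexN] [l Hl].
  destruct Hfr0 as [A0 [B0 [HA0 [HB0 Hfr1]]]].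
  assert (Hfr : forall x, exists s, infinite_sum (frame_terms H (fun _ => true) f x) s /\ A0 * vnorm H x ^ 2 <= s).
  { intros x. destruct (Hfr1 x) as [s [Hs [H1 _]]]. exists s; auto. }
  pose proof (B_pos H f B A0 HA0 Hfr Hopt Hinf) as HB.
  set (vl := fun n => nth n l vzero).
  set (idx := seq 0 (length l)).
  assert (Hmap : map vl idx = l) by apply map_nth_seq.
  assert (Hl_idx : forall t, In t l -> exists n, In n idx /\ vl n = t).
  { intros t Ht. rewrite <- Hmap in Ht. apply in_map_iff in Ht. destruct Ht as [n [E Hn]]. eauto. }
  destruct (GS (Hcvs H) (Hin H) vl idx (seq_NoDup _ _)) as [U [FU [HU_on [_ [_ [_ [HUsp [HUnull _]]]]]]]].
  assert (HU_sp : forall u, In u U -> gspan (Hcvs H) l u).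
  { intros u Hu. rewrite <- Hmap. auto. }
  assert (HlU : forall t, In t l -> gspan (Hcvs H) U t).
  { intros t Ht. destruct (Hl_idx t Ht) as [n [Hn <-]].
    assert (E : res (Hcvs H) (Hin H) U (vl n) = vzero) by (apply inner_zero_eq; exact (HUnull n Hn)).
    apply csub_eq0 in E. rewrite E. apply gspan_comb. intros; apply gspan_in; auto. }
  set (sfm := sform H f B A0 HA0 Hfr Hopt Hinf).
  destruct (GS (Hcvs H) sfm vl idx (seq_NoDup _ _)) as [Z [FZ [HZ_on [_ [_ [_ [HZsp [HZnull _]]]]]]]].
  assert (HZ_sp : forall z, In z Z -> gspan (Hcvs H) l z).
  { intros z Hz. rewrite <- Hmap. auto. }
  assert (HlZ : forall t, In t l -> gspan (Hcvs H) Z t).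
  { intros t Ht. destruct (Hl_idx t Ht) as [n [Hn <-]].
    set (r := res (Hcvs H) sfm Z (vl n)).
    assert (E : r = vzero).
    { apply inner_zero_eq. pose proof (HZnull n Hn) as K. fold r in K.
      pose proof (sf_bounds H f B A0 HA0 Hfr Hopt Hinf r) as [K1 _].
      change (Cre (sf H f B A0 HA0 Hfr Hopt Hinf r r) = 0) in K.
      pose proof (inner_pos H r). nra. }
    apply csub_eq0 in E. rewrite E. apply gspan_comb. intros; apply gspan_in; auto. }
  pose proof (M_bound H f B A0 HA0 Hfr Hopt Hinf l Hl U Z HU_on HU_sp HlU HZ_on HZ_sp HlZ N0 HexN) as MB.
  set (t := fun n => B - vnorm H (f n) ^ 2).
  assert (Ht : forall n, 0 <= t n).
  { intro n. unfold t. rewrite vnorm_sq.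
    pose proof (bessel H f B Hopt (f n) n) as Bs.
    pose proof (sum_ge_last (p H f (f n)) n (p_ge0 H f (f n))) as Sl.
    unfold p at 1 in Sl. pose proof (inner_im0 H (f n)) as Im. pose proof (inner_pos H (f n)).
    unfold Cmod2 in Sl. rewrite Im in Sl.
    set (r := Cre (inner (f n) (f n))) in *.
    destruct (Req_dec r 0); [lra|]. nra. }
  assert (Hbd : forall M, sum_f_R0 t M <= B * (INR N0 + INR (length Z))).
  { intro M. specialize (MB M).
    assert (E : sum_f_R0 t M = B * sum_f_R0 (fun n => 1 - / B * Cre (inner (f n) (f n))) M).
    { rewrite scal_sum. apply sum_eq. intros i _. unfold t. rewrite vnorm_sq. field. lra. }
    rewrite E. apply Rmult_le_compat_l; [lra | exact MB]. }
  destruct (growing_cv (sum_f_R0 t)) as [L HL].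
  - intro n. simpl. pose proof (Ht (S n)). lra.
  - exists (B * (INR N0 + INR (length Z))). intros x [i ->]. apply Hbd.
  - exists L. exact HL.
Qed.
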